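(* Let $z\neq 0,1$ be a fixed complex constant. The function \[ F_0(k,a,b) = z^{b+k}(z-1)^{a-b}\,\frac{\Gamma(a+k)}{\Gamma(b+k)}\,\Gamma(b-a) \] is a WZ seed in the variables $a,b$.
   Context: A term $F(n_1,\dots,n_r)$ is hypergeometric in $n_1,\dots,n_r$ if each ratio $F(\dots,n_i+1,\dots)/F(\dots,n_i,\dots)$ is a rational function of $n_1,\dots,n_r$. Write $\Delta_n f(n)=f(n+1)-f(n)$. Two hypergeometric terms $F(n,k),G(n,k)$ form a WZ pair, and $G$ is called a WZ mate of $F$, if $\Delta_n F(n,k)=\Delta_k G(n,k)$. A hypergeometric term $F_0(k,a,b,\dots)$ (hypergeometric in $k,a,b,\dots$) is a WZ seed in the variables $a,b,\dots$ if for all integers $K,A,B,\dots$ and all complex $k_0$ and all values of the parameters $a,b,\dots$, the term $F(n,k)=F_0(Kn+k_0+k,\,An+a,\,Bn+b,\dots)$ has a WZ mate $G(n,k)$ (a hypergeometric term). Factors such as $(-1)^x$ or $z^x$ with non-integer exponent $x$ are understood as hypergeometric factors satisfying $(-1)^{x+1}=-(-1)^x$, $z^{x+1}=z\cdot z^x$ (e.g. defined via a fixed branch of the exponential). *)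

(* Defs.v *)
From Stdlib Require Import Reals ZArith ClassicalEpsilon.
From Coquelicot Require Import Coquelicot.

Local Open Scope C_scope.

Definition Cexp (w : C) : C :=
  RtoC (exp (Re w)) * (RtoC (cos (Im w)) + Ci * RtoC (sin (Im w))).

(** [cpow L x] = "z^x" for the fixed branch determined by a logarithm [L]
    of z (i.e. [Cexp L = z]); it satisfies z^(x+1) = z * z^x. *)
Definition cpow (L x : C) : C := Cexp (x * L).

Fixpoint csum (n : nat) (f : nat -> C) : C :=
  match n with O => 0 | S n => csum n f + f n end.

Fixpoint cpown (x : C) (n : nat) : C :=
  match n with O => 1 | S n => cpown x n * x end.

Fixpoint poch (s : C) (m : nat) : C :=
  match m with O => 1 | S m => poch s m * (s + RtoC (INR m)) end.

(** Gauss' product for the reciprocal Gamma function: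
    1/Gamma(s) = lim_{m -> oo} s(s+1)...(s+m) / (m! m^s). *)
Definition rgamma_approx (s : C) (m : nat) : C :=
  poch s (S m) / (RtoC (INR (fact m)) * Cexp (s * RtoC (ln (INR m)))).

Definition RGamma (s : C) : C :=
  epsilon (inhabits (RtoC 0))
    (fun L => filterlim (rgamma_approx s) eventually (locally L)).

(** The Gamma function: Gamma s = 1 / RGamma s (at the poles s = 0,-1,-2,...
    this returns Cinv 0 = 0, a junk value never used below). *)
Definition Gamma (s : C) : C := / RGamma s.

Definition not_pole (s : C) : Prop := forall m : nat, s <> - RtoC (INR m).

Record poly2 := Poly2 { deg2 : nat; coef2 : nat -> nat -> C }.
Definition peval2 (p : poly2) (x y : C) : C :=
  csum (S (deg2 p)) (fun i => csum (S (deg2 p)) (fun j =>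
    coef2 p i j * cpown x i * cpown y j)).
Definition pnonzero2 (p : poly2) : Prop :=
  exists i j, (i <= deg2 p)%nat /\ (j <= deg2 p)%nat /\ coef2 p i j <> 0.

Record poly3 := Poly3 { deg3 : nat; coef3 : nat -> nat -> nat -> C }.
Definition peval3 (p : poly3) (x y w : C) : C :=
  csum (S (deg3 p)) (fun i => csum (S (deg3 p)) (fun j => csum (S (deg3 p))
    (fun l => coef3 p i j l * cpown x i * cpown y j * cpown w l))).
Definition pnonzero3 (p : poly3) : Prop :=
  exists i j l, (i <= deg3 p)%nat /\ (j <= deg3 p)%nat /\ (l <= deg3 p)%nat
    /\ coef3 p i j l <> 0.

Definition ZC (n : Z) : C := RtoC (IZR n).

(** [G : Z -> Z -> C] is hypergeometric in n, k: each shift ratio is a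
    rational function P/Q (Q a nonzero polynomial), i.e.
    Q(n,k) G(n+1,k) = P(n,k) G(n,k) and likewise for k. *)
Definition hypergeometric2 (G : Z -> Z -> C) : Prop :=
  (exists P Q : poly2, pnonzero2 Q /\ forall n k : Z,
     peval2 Q (ZC n) (ZC k) * G (n + 1)%Z k = peval2 P (ZC n) (ZC k) * G n k)
  /\
  (exists P Q : poly2, pnonzero2 Q /\ forall n k : Z,
     peval2 Q (ZC n) (ZC k) * G n (k + 1)%Z = peval2 P (ZC n) (ZC k) * G n k).

Definition hypergeometric3 (D : C -> C -> C -> Prop) (F0 : C -> C -> C -> C)
  : Prop :=
  (exists P Q : poly3, pnonzero3 Q /\ forall k a b : C,
     D k a b -> D (k + 1) a b ->
     peval3 Q k a b * F0 (k + 1) a b = peval3 P k a b * F0 k a b)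
  /\
  (exists P Q : poly3, pnonzero3 Q /\ forall k a b : C,
     D k a b -> D k (a + 1) b ->
     peval3 Q k a b * F0 k (a + 1) b = peval3 P k a b * F0 k a b)
  /\
  (exists P Q : poly3, pnonzero3 Q /\ forall k a b : C,
     D k a b -> D k a (b + 1) ->
     peval3 Q k a b * F0 k a (b + 1) = peval3 P k a b * F0 k a b).

Definition WZ_pair (F G : Z -> Z -> C) : Prop :=
  hypergeometric2 F /\ hypergeometric2 G /\
  forall n k : Z, F (n + 1)%Z k - F n k = G n (k + 1)%Z - G n k.

Definition WZ_seed (D : C -> C -> C -> Prop) (F0 : C -> C -> C -> C) : Prop :=
  hypergeometric3 D F0 /\
  forall (K A B : Z) (k0 a b : C),
    (forall n k : Z, D (ZC K * ZC n + k0 + ZC k) (ZC A * ZC n + a) (ZC B * ZC n + b)) ->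
    exists G : Z -> Z -> C,
      WZ_pair (fun n k => F0 (ZC K * ZC n + k0 + ZC k) (ZC A * ZC n + a) (ZC B * ZC n + b)) G.

(** The seed of the theorem, for z with fixed logarithms Lz of z and
    Lw of z - 1:  F0(k,a,b) = z^(b+k) (z-1)^(a-b) Gamma(a+k)/Gamma(b+k) Gamma(b-a). *)
Definition F0_seed (Lz Lw : C) (k a b : C) : C :=
  cpow Lz (b + k) * cpow Lw (a - b) * (Gamma (a + k) / Gamma (b + k)) * Gamma (b - a).

(** Domain of F0_seed: the Gamma factors in the numerator are finite.
    (1/Gamma(b+k) is entire, so the denominator imposes no condition.) *)
Definition F0_seed_dom (k a b : C) : Prop := not_pole (a + k) /\ not_pole (b - a).

(* Main.v *)
Require Import Defs.
From Stdlib Require Import Reals ZArith Lra Lia Psatz ClassicalEpsilon Classical.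
From Coquelicot Require Import Coquelicot.
Local Open Scope C_scope.

Lemma Cexp_eq (w : C) : Cexp w = (exp (Re w) * cos (Im w), exp (Re w) * sin (Im w))%R.
Proof. destruct w as [x y]; unfold Cexp, Re, Im; simpl.
  unfold Cmult, Cplus, RtoC, Ci; simpl. f_equal; ring. Qed.

Lemma Cexp_add (a b : C) : Cexp (a + b) = Cexp a * Cexp b.
Proof. rewrite !Cexp_eq. destruct a as [a1 a2], b as [b1 b2]; unfold Re, Im; simpl.
  unfold Cmult; simpl. rewrite exp_plus, cos_plus, sin_plus. f_equal; ring. Qed.

Lemma Cexp_0 : Cexp 0 = 1.
Proof. rewrite Cexp_eq; simpl. rewrite exp_0, cos_0, sin_0. unfold RtoC; f_equal; ring. Qed.

Lemma Cexp_neq0 (a : C) : Cexp a <> 0.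
Proof. intro H. assert (H2 : Cexp a * Cexp (-a) = 0) by (rewrite H; ring).
  rewrite <- Cexp_add in H2. replace (a + - a) with (RtoC 0) in H2 by ring.
  rewrite Cexp_0 in H2. injection H2; lra. Qed.

Lemma Cmod_le_sum (w : C) : (Cmod w <= Rabs (Re w) + Rabs (Im w))%R.
Proof. destruct w as [x y]; unfold Cmod, Re, Im; simpl.
  rewrite <- (sqrt_Rsqr (Rabs x + Rabs y)) by (pose proof (Rabs_pos x); pose proof (Rabs_pos y); lra).
  apply sqrt_le_1_alt. unfold Rsqr. rewrite !Rmult_1_r.
  pose proof (Rabs_pos x); pose proof (Rabs_pos y).
  replace (x*x)%R with (Rabs x * Rabs x)%R by (rewrite <- Rabs_mult; apply Rabs_pos_eq; nra).
  replace (y*y)%R with (Rabs y * Rabs y)%R by (rewrite <- Rabs_mult; apply Rabs_pos_eq; nra).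
  nra. Qed.

Lemma re_sq_le (w : C) : (Re w * Re w <= Cmod w * Cmod w)%R.
Proof. pose proof (Cmod2_alt w). simpl in H. pose proof (pow2_ge_0 (Im w)). simpl in H0. nra. Qed.
Lemma im_sq_le (w : C) : (Im w * Im w <= Cmod w * Cmod w)%R.
Proof. pose proof (Cmod2_alt w). simpl in H. pose proof (pow2_ge_0 (Re w)). simpl in H0. nra. Qed.

Lemma abs_le_of_sq (a b : R) : (0 <= b)%R -> (a*a <= b*b)%R -> (Rabs a <= b)%R.
Proof. intros Hb H. destruct (Rle_dec (Rabs a) b); auto.
  exfalso. assert (b < Rabs a)%R by lra. 
  assert (Rabs a * Rabs a = a * a)%R by (rewrite <- Rabs_mult; apply Rabs_pos_eq; nra). nra. Qed.

Lemma exp_bounds (x : R) : (Rabs x <= /2)%R ->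
  (Rabs (exp x - 1 - x) <= 2 * (x*x))%R /\ (exp x <= 2)%R.
Proof. intros Hx. apply Rabs_le_between in Hx.
  pose proof (exp_ineq1_le x). pose proof (exp_ineq1_le (-x)).
  assert (E : (exp x * exp (-x) = 1)%R) by (rewrite <- exp_plus; replace (x + -x)%R with 0%R by ring; apply exp_0).
  pose proof (exp_pos x). pose proof (exp_pos (-x)).
  assert (exp x * (1 - x) <= 1)%R by nra.
  assert (exp x <= 1 + x + 2 * (x*x))%R.
  { assert ((1 + x + 2*(x*x))*(1-x) >= 1)%R by nra. nra. }
  split. apply Rabs_le; split; nra. nra. Qed.

Lemma sin_basic (t : R) : (0 <= t <= /2)%R -> (t - t*t*t/6 <= sin t <= t)%R.
Proof.
intros [H1 H2]. pose proof PI2_3_2. assert (Ht : (t <= PI)%R) by lra. destruct (sin_bound t 0 H1 Ht) as [L U].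
unfold sin_approx, sin_term in *. 
cbn [sum_f_R0 Nat.mul Nat.add Factorial.fact pow] in *. 
replace (INR 1) with 1%R in * by reflexivity.
replace (INR 6) with 6%R in * by (simpl; ring).
replace (INR 120) with 120%R in * by (rewrite INR_IZR_INZ; reflexivity).
assert (t*t*t*t*t <= t*t*t)%R by (assert (t*t <= 1)%R by nra; assert (0 <= t*t*t)%R by (apply Rmult_le_pos; nra); nra). assert (0 <= t*t*t)%R by (apply Rmult_le_pos; nra). split; lra.
Qed.

Lemma sin_bounds (y : R) : (Rabs y <= /2)%R -> (Rabs (sin y - y) <= y*y)%R.
Proof. intros Hy.
  assert (H0 : forall t, (0 <= t <= /2)%R -> (Rabs (sin t - t) <= t*t)%R).
  { intros t Ht. pose proof (sin_basic t Ht). destruct Ht.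
    assert (t*t*t <= t*t)%R by nra. apply Rabs_le; split; nra. }
  destruct (Rle_dec 0 y). apply H0. apply Rabs_le_between in Hy; lra.
  replace (sin y - y)%R with (- (sin (-y) - (-y)))%R by (rewrite sin_neg; ring).
  rewrite Rabs_Ropp. replace (y*y)%R with ((-y)*(-y))%R by ring. apply H0.
  apply Rabs_le_between in Hy; lra. Qed.

Lemma cos_bounds (y : R) : (Rabs y <= /2)%R -> (Rabs (cos y - 1) <= y*y)%R.
Proof. intros Hy. apply Rabs_le_between in Hy. pose proof PI2_3_2.
  destruct (COS y ltac:(lra) ltac:(lra)) as [L U].
  unfold cos_lb, cos_approx, cos_term in *. 
  cbn [sum_f_R0 Nat.mul Nat.add Factorial.fact pow] in *.
  replace (INR 1) with 1%R in * by reflexivity.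
  replace (INR 2) with 2%R in * by (simpl; ring).
  replace (INR 24) with 24%R in * by (rewrite INR_IZR_INZ; reflexivity).
  replace (INR 720) with 720%R in * by (rewrite INR_IZR_INZ; reflexivity).
  pose proof (COS_bound y).
  assert (0 <= y*y*y*y)%R by nra. assert (y*y*y*y*y*y <= y*y*y*y)%R by (assert (y*y <= 1)%R by nra; nra).
  apply Rabs_le; split; lra. Qed.

Lemma Cexp_taylor (w : C) : (Cmod w <= /2)%R ->
  (Cmod (Cexp w - 1 - w) <= 6 * (Cmod w * Cmod w))%R.
Proof. intros Hw.
  set (x := Re w). set (y := Im w). set (m := Cmod w).
  assert (Hx : (Rabs x <= m)%R) by apply re_le_Cmod.
  assert (Hy : (Rabs y <= m)%R).
  { apply abs_le_of_sq. apply Cmod_ge_0. apply im_sq_le. }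
  pose proof (re_sq_le w) as Hx2. pose proof (im_sq_le w) as Hy2. fold x y m in Hx2, Hy2.
  assert (Hm : (m <= /2)%R) by exact Hw. assert (Hx' : (Rabs x <= /2)%R) by lra. assert (Hy' : (Rabs y <= /2)%R) by lra.
  destruct (exp_bounds x Hx') as [E1 E2].
  pose proof (sin_bounds y Hy') as S1. pose proof (cos_bounds y Hy') as C1.
  eapply Rle_trans. apply Cmod_le_sum.
  replace (Re (Cexp w - 1 - w)) with (exp x * cos y - 1 - x)%R by (unfold x, y; rewrite Cexp_eq; unfold Re, Im; simpl; ring).
  replace (Im (Cexp w - 1 - w)) with (exp x * sin y - 0 - y)%R by (unfold x, y; rewrite Cexp_eq; unfold Re, Im; simpl; ring).
  replace (exp x * cos y - 1 - x)%R with ((exp x - 1 - x) + exp x * (cos y - 1))%R by ring.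
  replace (exp x * sin y - 0 - y)%R with ((exp x - 1 - x) * sin y + x * sin y + (sin y - y))%R by ring.
  pose proof (exp_pos x).
  assert (Hs : (Rabs (sin y) <= Rabs y)%R).
  { destruct (Rle_dec 0 y). 
    - apply Rabs_le_between in Hy'. assert (Hyy : (0 <= y <= /2)%R) by lra. pose proof (sin_basic y Hyy). pose proof PI2_3_2. assert (0 <= sin y)%R by (apply sin_ge_0; lra). rewrite !Rabs_pos_eq; lra.
    - apply Rabs_le_between in Hy'. assert (Hyy : (0 <= -y <= /2)%R) by lra. pose proof (sin_basic (-y) Hyy). pose proof PI2_3_2. assert (0 <= sin (-y))%R by (apply sin_ge_0; lra). rewrite sin_neg in *.
      rewrite Rabs_left1 by lra. rewrite Rabs_left1 by lra. lra. }
  assert (Hs1 : (Rabs (sin y) <= 1)%R) by (apply Rabs_le; apply SIN_bound).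
  assert (Hsum : (x*x + y*y = m*m)%R) by (pose proof (Cmod2_alt w) as HH; fold x y m in HH; simpl in HH; lra).
  assert (B1 : (Rabs ((exp x - 1 - x) + exp x * (cos y - 1)) <= 2*(x*x) + 2*(y*y))%R).
  { eapply Rle_trans. apply Rabs_triang. rewrite Rabs_mult, (Rabs_pos_eq (exp x)) by lra.
    assert (exp x * Rabs (cos y - 1) <= 2 * (y*y))%R by (apply Rmult_le_compat; try lra; apply Rabs_pos). lra. }
  assert (B2 : (Rabs ((exp x - 1 - x) * sin y + x * sin y + (sin y - y)) <= 2*(x*x) + m*m + y*y)%R).
  { eapply Rle_trans. apply Rabs_triang. eapply Rle_trans. apply Rplus_le_compat_r. apply Rabs_triang.
    rewrite !Rabs_mult.
    assert (Rabs (exp x - 1 - x) * Rabs (sin y) <= 2 * (x*x))%R by (pose proof (Rabs_pos (exp x - 1 - x)); pose proof (Rabs_pos (sin y)); nra).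
    assert (Rabs x * Rabs (sin y) <= m * m)%R by (pose proof (Rabs_pos x); pose proof (Rabs_pos (sin y)); apply Rmult_le_compat; lra).
    lra. }
  lra. Qed.

Lemma Cexp_small (w : C) : (Cmod w <= /2)%R -> (Cmod (Cexp w - 1) <= 4 * Cmod w)%R.
Proof. intros Hw. pose proof (Cexp_taylor w Hw).
  replace (Cexp w - 1) with ((Cexp w - 1 - w) + w) by ring.
  eapply Rle_trans. apply Cmod_triangle. pose proof (Cmod_ge_0 w). nra. Qed.
Lemma inv_sq_le (m : nat) : (2 <= m)%nat ->
  (/ (INR m * INR m) <= / (INR m - 1) - / INR m)%R.
Proof. intros H. apply le_INR in H. simpl in H.
  assert (H2 : (/ (INR m - 1) - / INR m = / ((INR m - 1) * INR m))%R) by (field; lra).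
  rewrite H2. apply Rinv_le_contravar. nra. nra. Qed.

Lemma exp_mono (x y : R) : (x <= y)%R -> (exp x <= exp y)%R.
Proof. intros H. destruct (Rle_lt_or_eq_dec _ _ H). apply Rlt_le, exp_increasing; auto. subst; lra. Qed.

Lemma exp_ge1p (t : R) : (1 + t <= exp t)%R.
Proof. apply exp_ineq1_le. Qed.

Section Conv.
Variable u e : nat -> C.
Variable N : nat.
Variable Cc : R.
Hypothesis HN : (2 <= N)%nat.
Hypothesis HC : (0 <= Cc)%R.
Hypothesis Hrec : forall m, (N <= m)%nat -> u (S m) = u m * (1 + e m).
Hypothesis He : forall m, (N <= m)%nat -> (Cmod (e m) <= Cc / (INR m * INR m))%R.

Lemma conv_bound : forall k, (Cmod (u (N + k)%nat) <=
   Cmod (u N) * exp (Cc * (/ (INR N - 1) - / (INR (N + k) - 1))))%R.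
Proof. induction k.
  - rewrite Nat.add_0_r. replace (Cc * (/ (INR N - 1) - / (INR N - 1)))%R with 0%R by ring.
    rewrite exp_0. lra.
  - replace (N + S k)%nat with (S (N + k)) by lia. rewrite Hrec by lia.
    rewrite Cmod_mult. set (m := (N + k)%nat) in *.
    assert (Hm : (2 <= m)%nat) by lia.
    assert (Hm' : (2 <= INR m)%R) by (apply le_INR in Hm; simpl in Hm; lra).
    assert (E1 : (Cmod (1 + e m) <= 1 + Cc / (INR m * INR m))%R).
    { eapply Rle_trans. apply Cmod_triangle. rewrite Cmod_1. pose proof (He m ltac:(lia)). lra. }
    assert (E2 : (1 + Cc / (INR m * INR m) <= exp (Cc * (/ (INR m - 1) - / INR m)))%R).
    { eapply Rle_trans. 2: apply exp_ge1p. apply Rplus_le_compat_l. unfold Rdiv.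
      apply Rmult_le_compat_l; auto. apply inv_sq_le; auto. }
    rewrite S_INR.
    replace (INR m + 1 - 1)%R with (INR m) by ring.
    replace (Cc * (/ (INR N - 1) - / INR m))%R with (Cc * (/ (INR N - 1) - / (INR m - 1)) + Cc * (/ (INR m - 1) - / INR m))%R by ring.
    rewrite exp_plus.
    pose proof (Cmod_ge_0 (u m)). pose proof (Cmod_ge_0 (1 + e m)).
    eapply Rle_trans. apply Rmult_le_compat; [exact H| exact H0| exact IHk| eapply Rle_trans; [exact E1|exact E2]].
    rewrite Rmult_assoc. lra. Qed.

Definition Ubound := (Cmod (u N) * exp (Cc * / (INR N - 1)))%R.

Lemma conv_bound2 : forall m, (N <= m)%nat -> (Cmod (u m) <= Ubound)%R.
Proof. intros m Hm. replace m with (N + (m - N))%nat by lia.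
  eapply Rle_trans. apply conv_bound. unfold Ubound.
  apply Rmult_le_compat_l. apply Cmod_ge_0. apply exp_mono.
  assert (0 <= / (INR (N + (m - N)) - 1))%R.
  { apply Rlt_le, Rinv_0_lt_compat. assert (2 <= INR (N + (m-N)))%R by (apply (le_INR 2); lia). lra. }
  nra. Qed.

Lemma conv_cauchy : forall m k, (N <= m)%nat ->
  (Cmod (u (m + k)%nat - u m) <= Ubound * Cc * (/ (INR m - 1) - / (INR (m + k) - 1)))%R.
Proof. intros m k Hm. induction k.
  - rewrite Nat.add_0_r. replace (u m - u m) with (RtoC 0) by ring. rewrite Cmod_0.
    replace (/ (INR m - 1) - / (INR m - 1))%R with 0%R by ring. lra.
  - replace (m + S k)%nat with (S (m + k)) by lia.
    set (p := (m + k)%nat) in *.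
    replace (u (S p) - u m) with ((u p - u m) + u p * e p) by (rewrite Hrec by lia; ring).
    eapply Rle_trans. apply Cmod_triangle. rewrite Cmod_mult.
    assert (Hp : (2 <= p)%nat) by lia.
    assert (Hp' : (2 <= INR p)%R) by (apply le_INR in Hp; simpl in Hp; lra).
    pose proof (conv_bound2 p ltac:(lia)). pose proof (He p ltac:(lia)).
    pose proof (Cmod_ge_0 (u p)). pose proof (Cmod_ge_0 (e p)).
    assert (Cmod (u p) * Cmod (e p) <= Ubound * (Cc / (INR p * INR p)))%R by (apply Rmult_le_compat; auto).
    assert (Cc / (INR p * INR p) <= Cc * (/ (INR p - 1) - / INR p))%R.
    { unfold Rdiv. apply Rmult_le_compat_l; auto. apply inv_sq_le; auto. }
    assert (0 <= Ubound)%R by lra.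
    rewrite S_INR. replace (INR p + 1 - 1)%R with (INR p) by ring.
    assert (Ubound * (Cc / (INR p * INR p)) <= Ubound * (Cc * (/ (INR p - 1) - / INR p)))%R by (apply Rmult_le_compat_l; auto).
    nra. Qed.

Lemma conv_exists : exists l, filterlim u eventually (locally l).
Proof.
  apply (filterlim_locally_cauchy (U := CompleteNormedModule.CompleteSpace _ C_CompleteNormedModule) (F := eventually)).
  intros eps.
  assert (HU : (0 <= Ubound)%R) by (pose proof (conv_bound2 N (le_n N)); pose proof (Cmod_ge_0 (u N)); lra).
  set (X := (2 * Ubound * Cc / eps)%R).
  destruct (INR_archimed 1 X ltac:(lra)) as [M0 HM0]. rewrite Rmult_1_r in HM0.
  set (M := (N + M0 + 1)%nat).
  assert (HM : (X < INR M - 1)%R).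
  { unfold M. rewrite !plus_INR. simpl. assert (2 <= INR N)%R by (apply (le_INR 2); lia). lra. }
  exists (fun n => (M <= n)%nat). split. exists M; auto.
  intros a b Ha Hb. apply C_NormedModule_mixin_compat1.
  assert (Ha2 : (N <= a)%nat) by (unfold M in Ha; lia).
  pose proof (conv_cauchy M (a - M) ltac:(unfold M; lia)) as Ca.
  pose proof (conv_cauchy M (b - M) ltac:(unfold M; lia)) as Cb.
  replace (M + (a - M))%nat with a in Ca by lia. replace (M + (b - M))%nat with b in Cb by lia.
  assert (HMp : (0 < INR M - 1)%R). { assert (0 <= X)%R. unfold X. apply Rmult_le_pos. 2: apply Rlt_le, Rinv_0_lt_compat, cond_pos.
      apply Rmult_le_pos; lra. lra. }
  assert (Hia : (0 <= / (INR a - 1))%R). { apply Rlt_le, Rinv_0_lt_compat. apply le_INR in Ha. lra. }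
  assert (Hib : (0 <= / (INR b - 1))%R). { apply Rlt_le, Rinv_0_lt_compat. apply le_INR in Hb. lra. }
  assert (Hx : (Ubound * Cc * / (INR M - 1) < eps / 2)%R).
  { destruct (Req_dec (Ubound * Cc) 0) as [Z0|Z0]. rewrite Z0. pose proof (cond_pos eps). lra.
    assert (0 < Ubound * Cc)%R by (pose proof (Rmult_le_pos _ _ HU HC); lra).
    apply (Rmult_lt_reg_r (INR M - 1)); auto. rewrite Rmult_assoc, Rinv_l by lra.
    unfold X in HM. pose proof (cond_pos eps).
    apply (Rmult_lt_compat_l (eps / 2)) in HM; [|lra]. 
    replace (eps / 2 * (2 * Ubound * Cc / eps))%R with (Ubound * Cc)%R in HM by (field; lra). lra. }
  change (minus (u b) (u a)) with (u b - u a).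
  replace (u b - u a) with ((u b - u M) - (u a - u M)) by ring.
  eapply Rle_lt_trans. apply Cmod_triangle. rewrite Cmod_opp.
  assert (0 <= Ubound * Cc)%R by (apply Rmult_le_pos; auto).
  assert (Ubound * Cc * / (INR a - 1) >= 0)%R by (apply Rle_ge, Rmult_le_pos; auto).
  assert (Ubound * Cc * / (INR b - 1) >= 0)%R by (apply Rle_ge, Rmult_le_pos; auto).
  lra.
Qed.
End Conv.

Lemma RtoC_neq0 (x : R) : x <> 0%R -> RtoC x <> 0.
Proof. intros H H'. apply H. injection H'; auto. Qed.

Lemma Cexp_opp (w : C) : Cexp (- w) = / Cexp w.
Proof. assert (H : Cexp w * Cexp (- w) = 1) by (rewrite <- Cexp_add; replace (w + - w) with (RtoC 0) by ring; apply Cexp_0).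
  pose proof (Cexp_neq0 w). field_simplify_eq; auto. rewrite <- H. ring. Qed.

Definition Lg (m : nat) : R := (ln (INR (S m)) - ln (INR m))%R.
Definition eg (s : C) (m : nat) : C :=
  (1 + s / RtoC (INR (S m))) * Cexp (- (s * RtoC (Lg m))) - 1.

Lemma approx_step (s : C) (m : nat) :
  rgamma_approx s (S m) = rgamma_approx s m * (1 + eg s m).
Proof. unfold rgamma_approx, eg.
  change (poch s (S (S m))) with (poch s (S m) * (s + RtoC (INR (S m)))).
  change (Factorial.fact (S m)) with (S m * Factorial.fact m)%nat.
  rewrite mult_INR, RtoC_mult.
  replace (s * RtoC (ln (INR (S m)))) with (s * RtoC (ln (INR m)) + s * RtoC (Lg m))
    by (unfold Lg; rewrite RtoC_minus; ring).
  rewrite Cexp_add, Cexp_opp.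
  pose proof (Cexp_neq0 (s * RtoC (ln (INR m)))). pose proof (Cexp_neq0 (s * RtoC (Lg m))).
  assert (RtoC (INR (S m)) <> 0) by (apply RtoC_neq0, not_0_INR; lia).
  assert (RtoC (INR (Factorial.fact m)) <> 0) by (apply RtoC_neq0, INR_fact_neq_0).
  field. auto. Qed.

Lemma Lg_bounds (m : nat) : (1 <= m)%nat ->
  (/ INR (S m) <= Lg m <= / INR m)%R.
Proof. intros Hm. apply le_INR in Hm. simpl in Hm. rewrite S_INR. unfold Lg. rewrite S_INR.
  assert (Hm0 : (0 < INR m)%R) by lra.
  split.
  -
    assert (H : (ln (INR m / (INR m + 1)) <= - / (INR m + 1))%R).
    { rewrite <- (ln_exp (- / (INR m + 1))). apply ln_le. apply Rdiv_lt_0_compat; lra.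
      pose proof (exp_ge1p (- / (INR m + 1))). 
      replace (INR m / (INR m + 1))%R with (1 + - / (INR m + 1))%R by (field; lra). lra. }
    rewrite ln_div in H by lra. lra.
  - assert (H : (ln ((INR m + 1) / INR m) <= / INR m)%R).
    { rewrite <- (ln_exp (/ INR m)). apply ln_le. apply Rdiv_lt_0_compat; lra.
      pose proof (exp_ge1p (/ INR m)).
      replace ((INR m + 1) / INR m)%R with (1 + / INR m)%R by (field; lra). lra. }
    rewrite ln_div in H by lra. lra. Qed.

Lemma eg_bound (s : C) (m : nat) : (1 <= m)%nat -> (2 * Cmod s <= INR m)%R ->
  (Cmod (eg s m) <= (Cmod s + 10 * (Cmod s * Cmod s)) / (INR m * INR m))%R.
Proof. intros Hm Hsm. pose proof (Lg_bounds m Hm) as [L1 L2].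
  set (mm := INR m) in *. set (L := Lg m) in *. set (sg := Cmod s). assert (Hsm' : (2 * sg <= mm)%R) by exact Hsm. clear Hsm.
  assert (Hmm : (1 <= mm)%R) by (apply (le_INR 1) in Hm; exact Hm).
  assert (HS : INR (S m) = (mm + 1)%R) by (rewrite S_INR; auto).
  rewrite HS in L1.
  assert (Hsg : (0 <= sg)%R) by apply Cmod_ge_0.
  assert (HL0 : (0 < L)%R). { eapply Rlt_le_trans. 2: exact L1. apply Rinv_0_lt_compat. lra. }
  assert (HLm : (L * mm <= 1)%R). { apply (Rmult_le_compat_r mm) in L2; [|lra]. rewrite Rinv_l in L2; lra. }
  set (w := - (s * RtoC L)).
  set (a := s * RtoC (/ (mm + 1))).
  assert (Ha : s / RtoC (INR (S m)) = a). { unfold a. rewrite HS. unfold Cdiv. rewrite RtoC_inv; auto. lra. }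
  unfold eg. rewrite Ha. fold L. fold w.
  assert (Cw : (Cmod w = sg * L)%R). { unfold w. rewrite Cmod_opp, Cmod_mult, Cmod_R, Rabs_pos_eq; [reflexivity|lra]. }
  assert (Ca : (Cmod a = sg * / (mm + 1))%R). { unfold a. rewrite Cmod_mult, Cmod_R, Rabs_pos_eq; [reflexivity|]. apply Rlt_le, Rinv_0_lt_compat; lra. }
  assert (Hwm : (Cmod w * mm <= sg)%R) by (rewrite Cw; nra).
  assert (Hw2 : (Cmod w <= / 2)%R).
  { assert (Cmod w * mm <= mm / 2)%R by lra. apply (Rmult_le_reg_r mm); lra. }
  assert (Ham : (Cmod a * mm <= sg)%R).
  { rewrite Ca. assert (/ (mm + 1) * mm <= 1)%R. { apply (Rmult_le_reg_r (mm+1)); [lra|]. rewrite Rmult_assoc, (Rmult_comm mm), <- Rmult_assoc, Rinv_l by lra. lra. } nra. }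
  assert (Ha2 : (Cmod a <= / 2)%R).
  { assert (Cmod a * mm <= mm / 2)%R by lra. apply (Rmult_le_reg_r mm); lra. }
  pose proof (Cexp_taylor w Hw2) as T.
  replace ((1 + a) * Cexp w - 1) with ((a + w) + a * w + (1 + a) * (Cexp w - 1 - w)) by ring.
  assert (Caw : (Cmod (a + w) <= sg * (/ mm - / (mm + 1)))%R).
  { replace (a + w) with (s * RtoC (/ (mm + 1) - L)) by (unfold a, w; rewrite RtoC_minus; ring).
    rewrite Cmod_mult, Cmod_R. fold sg. rewrite Rabs_left1 by lra. apply Rmult_le_compat_l; lra. }
  assert (Hinv : (/ mm - / (mm + 1) <= / (mm * mm))%R).
  { replace (/ mm - / (mm + 1))%R with (/ (mm * (mm + 1)))%R by (field; lra).
    apply Rinv_le_contravar; nra. }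
  assert (P1 : (Cmod (a + w) <= sg / (mm * mm))%R). { unfold Rdiv. eapply Rle_trans. exact Caw. apply Rmult_le_compat_l; auto. }
  assert (Hmm2 : (0 < mm * mm)%R) by nra.
  assert (P2 : (Cmod (a * w) <= (sg * sg) / (mm * mm))%R).
  { rewrite Cmod_mult. apply (Rmult_le_reg_r (mm * mm)); auto. replace (sg * sg / (mm * mm) * (mm * mm))%R with (sg * sg)%R by (field; lra).
    replace (Cmod a * Cmod w * (mm * mm))%R with ((Cmod a * mm) * (Cmod w * mm))%R by ring.
    apply Rmult_le_compat; try lra. apply Rmult_le_pos; [apply Cmod_ge_0|lra]. apply Rmult_le_pos; [apply Cmod_ge_0|lra]. }
  assert (P3 : (Cmod ((1 + a) * (Cexp w - 1 - w)) <= 9 * (sg * sg) / (mm * mm))%R).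
  { rewrite Cmod_mult. assert (Cmod (1 + a) <= 3/2)%R by (eapply Rle_trans; [apply Cmod_triangle|]; rewrite Cmod_1; lra).
    assert (Cmod w * Cmod w * (mm * mm) <= sg * sg)%R.
    { replace (Cmod w * Cmod w * (mm * mm))%R with ((Cmod w * mm) * (Cmod w * mm))%R by ring.
      apply Rmult_le_compat; try lra; apply Rmult_le_pos; try lra; apply Cmod_ge_0. }
    assert (Cmod w * Cmod w <= sg * sg / (mm * mm))%R.
    { apply (Rmult_le_reg_r (mm * mm)); auto. replace (sg * sg / (mm * mm) * (mm * mm))%R with (sg * sg)%R by (field; lra). lra. }
    pose proof (Cmod_ge_0 (1 + a)). pose proof (Cmod_ge_0 (Cexp w - 1 - w)).
    assert (Cmod (1 + a) * Cmod (Cexp w - 1 - w) <= 3/2 * (6 * (sg * sg / (mm * mm))))%R.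
    { apply Rmult_le_compat; auto. lra. }
    unfold Rdiv in *. lra. }
  eapply Rle_trans. apply Cmod_triangle. eapply Rle_trans. apply Rplus_le_compat_r. apply Cmod_triangle.
  unfold Rdiv in *. lra. Qed.

Lemma exists_large (X : R) : exists N : nat, forall m, (N <= m)%nat -> (X < INR m)%R.
Proof. destruct (INR_archimed 1 X ltac:(lra)) as [n Hn]. exists n. intros m Hm.
  apply le_INR in Hm. lra. Qed.

Lemma rgamma_exists (s : C) : exists l, filterlim (rgamma_approx s) eventually (locally l).
Proof.
  destruct (exists_large (2 * Cmod s)) as [n Hn].
  apply (conv_exists (rgamma_approx s) (eg s) (n + 2) (Cmod s + 10 * (Cmod s * Cmod s))).
  - lia.
  - pose proof (Cmod_ge_0 s). nra.
  - intros m Hm. apply approx_step.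
  - intros m Hm. apply eg_bound. lia. apply Rlt_le, Hn. lia. Qed.

Lemma RGamma_lim (s : C) : filterlim (rgamma_approx s) eventually (locally (RGamma s)).
Proof. unfold RGamma. apply (epsilon_spec (inhabits (RtoC 0))
  (fun L => filterlim (rgamma_approx s) eventually (locally L))). apply rgamma_exists. Qed.

Lemma lim_eps (u : nat -> C) (l : C) : filterlim u eventually (locally l) ->
  forall eps, (0 < eps)%R -> exists N, forall n, (N <= n)%nat -> (Cmod (u n - l) < eps)%R.
Proof. intros H eps He. rewrite filterlim_locally in H.
  destruct (H (mkposreal (eps / 2) ltac:(lra))) as [N HN]. exists N. intros n Hn.
  specialize (HN n Hn). apply C_NormedModule_mixin_compat2 in HN. simpl in HN.
  change (minus (u n) l) with (u n - l) in HN.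
  assert (sqrt 2 < 2)%R. { assert (sqrt 2 * sqrt 2 = 2)%R by (apply sqrt_sqrt; lra). pose proof (sqrt_pos 2). nra. }
  nra. Qed.

Lemma poch_shift (s : C) (n : nat) : poch s (S n) = s * poch (s + 1) n.
Proof. induction n. simpl. ring.
  change (poch s (S (S n))) with (poch s (S n) * (s + RtoC (INR (S n)))).
  rewrite IHn. change (poch (s + 1) (S n)) with (poch (s+1) n * (s + 1 + RtoC (INR n))).
  rewrite S_INR, RtoC_plus. ring. Qed.

Lemma Cexp_R (r : R) : Cexp (RtoC r) = RtoC (exp r).
Proof. rewrite Cexp_eq. unfold Re, Im; simpl. rewrite cos_0, sin_0. unfold RtoC. f_equal; ring. Qed.

Definition fac (s : C) (m : nat) : C := RtoC (INR (S m) / INR m) * Cexp (s * RtoC (Lg m)).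

Lemma shift_identity (s : C) (m : nat) : (1 <= m)%nat ->
  s * rgamma_approx (s + 1) m = rgamma_approx s (S m) * fac s m.
Proof. intros Hm. unfold rgamma_approx, fac.
  rewrite (poch_shift s (S m)).
  change (Factorial.fact (S m)) with (S m * Factorial.fact m)%nat.
  rewrite mult_INR, RtoC_mult.
  replace (s * RtoC (ln (INR (S m)))) with (s * RtoC (ln (INR m)) + s * RtoC (Lg m))
    by (unfold Lg; rewrite RtoC_minus; ring).
  replace ((s + 1) * RtoC (ln (INR m))) with (s * RtoC (ln (INR m)) + RtoC (ln (INR m))) by ring.
  rewrite !Cexp_add, Cexp_R, exp_ln by (apply (lt_INR 0); lia).
  pose proof (Cexp_neq0 (s * RtoC (ln (INR m)))). pose proof (Cexp_neq0 (s * RtoC (Lg m))).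
  assert (RtoC (INR (S m)) <> 0) by (apply RtoC_neq0, not_0_INR; lia).
  assert (INR m <> 0%R) by (apply not_0_INR; lia).
  assert (RtoC (INR m) <> 0) by (apply RtoC_neq0; auto).
  assert (RtoC (INR (Factorial.fact m)) <> 0) by (apply RtoC_neq0, INR_fact_neq_0).
  rewrite RtoC_div by auto. field. auto. Qed.

Lemma fac_lim (s : C) : forall eps, (0 < eps)%R -> exists N, forall m, (N <= m)%nat ->
  (Cmod (fac s m - 1) < eps)%R.
Proof. intros eps He.
  destruct (exists_large ((3 + 4 * Cmod s) / eps + 2 * Cmod s + 1)) as [N HN].
  exists N. intros m Hm. specialize (HN m Hm).
  pose proof (Cmod_ge_0 s).
  assert (Hm1 : (1 <= m)%nat). { destruct m. simpl in HN. assert (0 <= (3 + 4 * Cmod s) / eps)%R by (apply Rdiv_le_0_compat; lra). lra. lia. }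
  pose proof (Lg_bounds m Hm1) as [L1 L2].
  set (mm := INR m) in *.
  assert (Hmm : (1 <= mm)%R) by (apply (le_INR 1) in Hm1; exact Hm1).
  assert (HL0 : (0 < Lg m)%R). { eapply Rlt_le_trans. 2: exact L1. apply Rinv_0_lt_compat. apply (lt_INR 0); lia. }
  assert (HLm : (Lg m * mm <= 1)%R). { apply (Rmult_le_compat_r mm) in L2; [|lra]. rewrite Rinv_l in L2; lra. }
  set (w := s * RtoC (Lg m)).
  assert (Cw : (Cmod w = Cmod s * Lg m)%R). { unfold w. rewrite Cmod_mult, Cmod_R, Rabs_pos_eq; lra. }
  assert (Cwm : (Cmod w * mm <= Cmod s)%R) by (rewrite Cw; nra).
  assert (Hp0 : (0 <= (3 + 4 * Cmod s) / eps)%R) by (apply Rdiv_le_0_compat; lra).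
  assert (Hw2 : (Cmod w <= / 2)%R). { assert (Cmod w * mm <= mm / 2)%R by lra. apply (Rmult_le_reg_r mm); lra. }
  pose proof (Cexp_small w Hw2) as E.
  unfold fac. fold w. fold mm.
  replace (RtoC (INR (S m) / mm) * Cexp w - 1) with (RtoC (/ mm) * Cexp w + (Cexp w - 1)).
  2:{ rewrite S_INR. fold mm. replace ((mm + 1) / mm)%R with (1 + / mm)%R by (field; lra). rewrite RtoC_plus. ring. }
  eapply Rle_lt_trans. apply Cmod_triangle. rewrite Cmod_mult, Cmod_R, Rabs_pos_eq by (apply Rlt_le, Rinv_0_lt_compat; lra).
  assert (CE : (Cmod (Cexp w) <= 3)%R).
  { replace (Cexp w) with ((Cexp w - 1) + 1) by ring. eapply Rle_trans. apply Cmod_triangle. rewrite Cmod_1. lra. }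
  assert (Hp : (0 < (3 + 4 * Cmod s) / eps)%R) by (apply Rdiv_lt_0_compat; lra).
  assert (Hbig : ((3 + 4 * Cmod s) / eps < mm)%R) by lra.
  assert (Hb2 : (3 + 4 * Cmod s < eps * mm)%R).
  { apply (Rmult_lt_compat_l eps) in Hbig; auto. replace (eps * ((3 + 4 * Cmod s) / eps))%R with (3 + 4 * Cmod s)%R in Hbig by (field; lra). lra. }
  assert (/ mm * Cmod (Cexp w) + Cmod (Cexp w - 1) <= (3 + 4 * Cmod s) / mm)%R.
  { assert (/ mm * Cmod (Cexp w) <= 3 / mm)%R. { unfold Rdiv. rewrite Rmult_comm. apply Rmult_le_compat_r. apply Rlt_le, Rinv_0_lt_compat; lra. auto. }
    assert (Cmod (Cexp w - 1) <= 4 * Cmod s / mm)%R.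
    { eapply Rle_trans. exact E. apply (Rmult_le_reg_r mm). lra. replace (4 * Cmod s / mm * mm)%R with (4 * Cmod s)%R by (field; lra). nra. }
    unfold Rdiv in *. lra. }
  eapply Rle_lt_trans. exact H0. apply (Rmult_lt_reg_r mm). lra. replace ((3 + 4 * Cmod s) / mm * mm)%R with (3 + 4 * Cmod s)%R by (field; lra). lra. Qed.

Lemma Cminus_eq_0 (a b : C) : a - b = 0 -> a = b.
Proof. intros H. replace a with ((a - b) + b) by ring. rewrite H. ring. Qed.

Lemma Cmod_small_eq (x : C) : (forall eps, (0 < eps)%R -> (Cmod x < eps)%R) -> x = 0.
Proof. intros H. apply Cmod_eq_0. pose proof (Cmod_ge_0 x).
  destruct (Req_dec (Cmod x) 0); auto. specialize (H (Cmod x) ltac:(lra)). lra. Qed.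

Lemma RGamma_shift (s : C) : s * RGamma (s + 1) = RGamma s.
Proof.
  set (l1 := RGamma (s + 1)). set (l := RGamma s).
  apply Cminus_eq_0. apply Cmod_small_eq. intros eps He.
  pose proof (Cmod_ge_0 s). pose proof (Cmod_ge_0 l).
  set (d1 := (eps / (3 * (Cmod s + 1)))%R).
  set (d2 := Rmin 1 (eps / 3)).
  set (d3 := (eps / (3 * (Cmod l + 2)))%R).
  assert (Hd1 : (0 < d1)%R) by (unfold d1; apply Rdiv_lt_0_compat; lra).
  assert (Hd2 : (0 < d2)%R) by (unfold d2; apply Rmin_pos; lra).
  assert (Hd3 : (0 < d3)%R) by (unfold d3; apply Rdiv_lt_0_compat; lra).
  destruct (lim_eps _ _ (RGamma_lim (s + 1)) d1 Hd1) as [N1 H1].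
  destruct (lim_eps _ _ (RGamma_lim s) d2 Hd2) as [N2 H2].
  destruct (fac_lim s d3 Hd3) as [N3 H3].
  set (m := (N1 + N2 + N3 + 1)%nat).
  specialize (H1 m ltac:(unfold m; lia)). specialize (H2 (S m) ltac:(unfold m; lia)).
  specialize (H3 m ltac:(unfold m; lia)).
  pose proof (shift_identity s m ltac:(unfold m; lia)) as SI.
  set (u1 := rgamma_approx (s + 1) m) in *. set (u2 := rgamma_approx s (S m)) in *.
  fold l1 in H1. fold l in H2.
  replace (s * l1 - l) with (s * (l1 - u1) + u2 * (fac s m - 1) + (u2 - l)).
  2:{ replace (u2 * (fac s m - 1)) with (u2 * fac s m - u2) by ring. rewrite <- SI. ring. }
  assert (Hu2 : (Cmod u2 <= Cmod l + 1)%R).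
  { replace u2 with ((u2 - l) + l) by ring. eapply Rle_trans. apply Cmod_triangle.
    assert (d2 <= 1)%R by apply Rmin_l. lra. }
  assert (Hd2e : (d2 <= eps / 3)%R) by apply Rmin_r.
  assert (A1 : (Cmod (s * (l1 - u1)) <= Cmod s * d1)%R).
  { rewrite Cmod_mult. apply Rmult_le_compat_l; auto. replace (l1 - u1) with (- (u1 - l1)) by ring. rewrite Cmod_opp. lra. }
  assert (A1' : (Cmod s * d1 < eps / 3)%R).
  { unfold d1. replace (Cmod s * (eps / (3 * (Cmod s + 1))))%R with ((eps / 3) * (Cmod s / (Cmod s + 1)))%R by (field; lra).
    assert (Cmod s / (Cmod s + 1) < 1)%R. { apply (Rmult_lt_reg_r (Cmod s + 1)); [lra|]. replace (Cmod s / (Cmod s + 1) * (Cmod s + 1))%R with (Cmod s) by (field; lra). lra. }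
    assert (0 < eps / 3)%R by lra. nra. }
  assert (A3 : (Cmod (u2 * (fac s m - 1)) < eps / 3)%R).
  { rewrite Cmod_mult. pose proof (Cmod_ge_0 u2). pose proof (Cmod_ge_0 (fac s m - 1)).
    assert (Cmod u2 * Cmod (fac s m - 1) <= (Cmod l + 1) * d3)%R by (apply Rmult_le_compat; lra).
    assert ((Cmod l + 1) * d3 < eps / 3)%R.
    { unfold d3. replace ((Cmod l + 1) * (eps / (3 * (Cmod l + 2))))%R with ((eps / 3) * ((Cmod l + 1) / (Cmod l + 2)))%R by (field; lra).
      assert ((Cmod l + 1) / (Cmod l + 2) < 1)%R. { apply (Rmult_lt_reg_r (Cmod l + 2)); [lra|]. replace ((Cmod l + 1) / (Cmod l + 2) * (Cmod l + 2))%R with (Cmod l + 1)%R by (field; lra). lra. }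
      assert (0 < eps / 3)%R by lra. nra. }
    lra. }
  eapply Rle_lt_trans. apply Cmod_triangle. eapply Rle_lt_trans. apply Rplus_le_compat_r. apply Cmod_triangle.
  lra. Qed.
Lemma Cinv_0 : / (RtoC 0) = 0.
Proof. unfold Cinv; simpl. unfold RtoC. f_equal; unfold Rdiv; rewrite ?Rmult_0_l, ?Rmult_0_r; try ring.
  Qed.

Lemma Cinv_inv (x : C) : / / x = x.
Proof. destruct (Ceq_dec x 0) as [H|H]. subst. rewrite !Cinv_0. reflexivity.
  field. auto. Qed.

Lemma Gamma_shift1 (s : C) : s <> 0 -> Gamma (s + 1) = s * Gamma s.
Proof. intros Hs. unfold Gamma. rewrite <- (RGamma_shift s).
  destruct (Ceq_dec (RGamma (s+1)) 0) as [H|H].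
  - rewrite H. replace (s * 0) with (RtoC 0) by ring. rewrite Cinv_0. ring.
  - field. auto. Qed.

Lemma RGamma_poch (y : C) (n : nat) : RGamma y = poch y n * RGamma (y + RtoC (INR n)).
Proof. induction n. simpl. replace (y + RtoC 0) with y by ring. ring.
  rewrite IHn. change (poch y (S n)) with (poch y n * (y + RtoC (INR n))).
  rewrite <- (RGamma_shift (y + RtoC (INR n))). rewrite S_INR, RtoC_plus.
  replace (y + (RtoC (INR n) + RtoC 1)) with (y + RtoC (INR n) + 1) by ring. ring. Qed.

Lemma Gamma_poch (x : C) (n : nat) : (forall j, (j < n)%nat -> x + RtoC (INR j) <> 0) ->
  Gamma (x + RtoC (INR n)) = poch x n * Gamma x.
Proof. induction n; intros H. simpl. replace (x + RtoC 0) with x by ring. ring.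
  rewrite S_INR, RtoC_plus. replace (x + (RtoC (INR n) + RtoC 1)) with (x + RtoC (INR n) + 1) by ring.
  rewrite Gamma_shift1 by (apply H; lia). rewrite IHn by (intros; apply H; lia).
  change (poch x (S n)) with (poch x n * (x + RtoC (INR n))). ring. Qed.

Lemma Cexp_nat (L : C) (n : nat) : Cexp (RtoC (INR n) * L) = (Cexp L) ^ n.
Proof. induction n. simpl. replace (RtoC 0 * L) with (RtoC 0) by ring. apply Cexp_0.
  rewrite S_INR, RtoC_plus. replace ((RtoC (INR n) + RtoC 1) * L) with (RtoC (INR n) * L + L) by ring.
  rewrite Cexp_add, IHn, Cpow_S. ring. Qed.

Lemma cpow_add_nat (L e : C) (n : nat) : cpow L (e + RtoC (INR n)) = cpow L e * (Cexp L) ^ n.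
Proof. unfold cpow. replace ((e + RtoC (INR n)) * L) with (e * L + RtoC (INR n) * L) by ring.
  rewrite Cexp_add, Cexp_nat. reflexivity. Qed.
Definition P3lin (c0 ck ca cb : C) : poly3 :=
  Poly3 1%nat (fun i j l => match i, j, l with
    | O,O,O => c0 | S O,O,O => ck | O,S O,O => ca | O,O,S O => cb | _,_,_ => RtoC 0 end).

Lemma P3lin_eval c0 ck ca cb k a b : peval3 (P3lin c0 ck ca cb) k a b = c0 + ck*k + ca*a + cb*b.
Proof. unfold peval3, P3lin. cbn [csum cpown deg3 coef3]. ring. Qed.

Lemma not_pole_0 (s : C) : not_pole s -> s <> 0.
Proof. intros H E. apply (H 0%nat). rewrite E, INR_0. ring. Qed.

Lemma cpow_add1 (L e : C) : cpow L (e + 1) = cpow L e * Cexp L.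
Proof. replace (e + 1) with (e + RtoC (INR 1)) by (simpl; reflexivity). rewrite cpow_add_nat. simpl. ring. Qed.

Lemma F0_alt Lz Lw k a b : F0_seed Lz Lw k a b =
  cpow Lz (b + k) * cpow Lw (a - b) * Gamma (a + k) * RGamma (b + k) * Gamma (b - a).
Proof. unfold F0_seed. unfold Cdiv. unfold Gamma at 2. rewrite Cinv_inv. ring. Qed.

Lemma C1_neq0 : RtoC 1 <> 0.
Proof. apply RtoC_neq0. lra. Qed.

Section Hyp3.
Variable z Lz Lw : C.
Hypothesis hz0 : z <> 0.
Hypothesis hz1 : z <> 1.
Hypothesis hLz : Cexp Lz = z.
Hypothesis hLw : Cexp Lw = z - 1.

Lemma hyp3 : hypergeometric3 F0_seed_dom (F0_seed Lz Lw).
Proof.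
  assert (hz1' : z - 1 <> 0) by (intro H; apply hz1; replace z with ((z - 1) + 1) by ring; rewrite H; ring).
  split; [|split].
  - exists (P3lin 0 z z 0), (P3lin 0 1 0 1). split.
    exists 1%nat, 0%nat, 0%nat. unfold P3lin; cbn [deg3 coef3]. split; [lia|split;[lia|split;[lia|apply C1_neq0]]].
    intros k a b [D1 D2] _. rewrite !P3lin_eval, !F0_alt.
    replace (a + (k + 1)) with ((a + k) + 1) by ring. replace (b + (k + 1)) with ((b + k) + 1) by ring.
    rewrite Gamma_shift1 by (apply not_pole_0; auto). rewrite cpow_add1, hLz.
    rewrite <- (RGamma_shift (b + k)). ring.
  - exists (P3lin 0 (z - 1) (z - 1) 0), (P3lin (-1) 0 (-1) 1). split.
    exists 0%nat, 0%nat, 1%nat. unfold P3lin; cbn [deg3 coef3]. split; [lia|split;[lia|split;[lia|apply C1_neq0]]].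
    intros k a b [D1 D2] [D3 D4]. rewrite !P3lin_eval, !F0_alt.
    replace (a + 1 + k) with ((a + k) + 1) by ring. replace (a + 1 - b) with ((a - b) + 1) by ring.
    rewrite Gamma_shift1 by (apply not_pole_0; auto). rewrite cpow_add1, hLw.
    replace (b - a) with ((b - (a + 1)) + 1) by ring.
    rewrite (Gamma_shift1 (b - (a + 1))) by (apply not_pole_0; auto). ring.
  - exists (P3lin 0 0 (-z) z), (P3lin 0 (z - 1) 0 (z - 1)). split.
    exists 0%nat, 0%nat, 1%nat. unfold P3lin; cbn [deg3 coef3]. split; [lia|split;[lia|split;[lia|auto]]].
    intros k a b [D1 D2] [D3 D4]. rewrite !P3lin_eval, !F0_alt.
    replace (b + 1 + k) with ((b + k) + 1) by ring. replace (b + 1 - a) with ((b - a) + 1) by ring.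
    rewrite Gamma_shift1 by (apply not_pole_0; auto). rewrite cpow_add1, hLz.
    replace (a - b) with ((a - (b + 1)) + 1) by ring. rewrite cpow_add1, hLw.
    rewrite <- (RGamma_shift (b + k)). ring.
Qed.
End Hyp3.
From Stdlib Require Import List.
Local Open Scope list_scope.
Local Open Scope C_scope.
Inductive pe : Type := PC (c : C) | PX | PY | PAdd (p q : pe) | PMul (p q : pe).

Fixpoint pev (e : pe) (x y : C) : C :=
  match e with
  | PC c => c | PX => x | PY => y
  | PAdd p q => pev p x y + pev q x y
  | PMul p q => pev p x y * pev q x y
  end.

Fixpoint shiftX (e : pe) : pe :=
  match e with
  | PX => PAdd PX (PC 1) | PAdd p q => PAdd (shiftX p) (shiftX q)
  | PMul p q => PMul (shiftX p) (shiftX q) | e => e end.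
Fixpoint shiftY (e : pe) : pe :=
  match e with
  | PY => PAdd PY (PC 1) | PAdd p q => PAdd (shiftY p) (shiftY q)
  | PMul p q => PMul (shiftY p) (shiftY q) | e => e end.

Lemma shiftX_ev e x y : pev (shiftX e) x y = pev e (x + 1) y.
Proof. induction e; simpl; try rewrite IHe1, IHe2; reflexivity. Qed.
Lemma shiftY_ev e x y : pev (shiftY e) x y = pev e x (y + 1).
Proof. induction e; simpl; try rewrite IHe1, IHe2; reflexivity. Qed.

Lemma Cmult_integral (a b : C) : a * b = 0 -> a = 0 \/ b = 0.
Proof. intros H. destruct (Ceq_dec a 0); [left; auto|right].
  replace b with (/ a * (a * b)) by (field; auto). rewrite H. ring. Qed.
Lemma Cmult_neq0 (a b : C) : a <> 0 -> b <> 0 -> a * b <> 0.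
Proof. intros Ha Hb H. destruct (Cmult_integral a b H); auto. Qed.

Lemma csum_ext n (f g : nat -> C) : (forall i, (i < n)%nat -> f i = g i) -> csum n f = csum n g.
Proof. induction n; intros H; simpl. reflexivity. rewrite IHn by (intros; apply H; lia). rewrite H by lia. reflexivity. Qed.
Lemma csum_add n (f g : nat -> C) : csum n (fun i => f i + g i) = csum n f + csum n g.
Proof. induction n; simpl. ring. rewrite IHn. ring. Qed.
Lemma csum_scal n (c : C) (f : nat -> C) : c * csum n f = csum n (fun i => c * f i).
Proof. induction n; simpl. ring. rewrite <- IHn. ring. Qed.
Lemma csum_zero n (f : nat -> C) : (forall i, (i < n)%nat -> f i = 0) -> csum n f = 0.
Proof. induction n; intros H; simpl. reflexivity. rewrite IHn by (intros; apply H; lia). rewrite H by lia. ring. Qed.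
Lemma csum_delta_gen n a (f : nat -> C) : csum n (fun i => if Nat.eqb a i then f i else 0) = if Nat.ltb a n then f a else 0.
Proof. induction n; simpl. destruct a; reflexivity. rewrite IHn.
  destruct (Nat.eqb_spec a n); destruct (Nat.ltb_spec a n); destruct (Nat.ltb_spec a (S n)); try lia; subst; ring. Qed.
Lemma csum_delta n a (f : nat -> C) : (a < n)%nat -> csum n (fun i => if Nat.eqb a i then f i else 0) = f a.
Proof. intros H. rewrite csum_delta_gen. destruct (Nat.ltb_spec a n); [reflexivity|lia]. Qed.
Lemma csum_shift n (f : nat -> C) : csum (S n) f = f 0%nat + csum n (fun i => f (S i)).
Proof. induction n; simpl. ring. simpl in IHn. rewrite IHn. ring. Qed.

Lemma cpown_add x i j : cpown x (i + j) = cpown x i * cpown x j.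
Proof. induction j. rewrite Nat.add_0_r. simpl. ring. rewrite Nat.add_succ_r. simpl. rewrite IHj. ring. Qed.

Definition mon : Type := (C * nat * nat)%type.
Definition monv (m : mon) (x y : C) : C := let '(c, i, j) := m in c * cpown x i * cpown y j.
Fixpoint evalM (L : list mon) (x y : C) : C :=
  match L with nil => 0 | m :: L' => monv m x y + evalM L' x y end.
Definition mulmon (m1 m2 : mon) : mon :=
  let '(c1, i1, j1) := m1 in let '(c2, i2, j2) := m2 in (c1 * c2, (i1 + i2)%nat, (j1 + j2)%nat).

Fixpoint mons (e : pe) : list mon :=
  match e with
  | PC c => (c, 0%nat, 0%nat) :: nil
  | PX => (RtoC 1, 1%nat, 0%nat) :: nil
  | PY => (RtoC 1, 0%nat, 1%nat) :: nil
  | PAdd p q => mons p ++ mons q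
  | PMul p q => flat_map (fun m1 => map (mulmon m1) (mons q)) (mons p)
  end.

Lemma evalM_app L1 L2 x y : evalM (L1 ++ L2) x y = evalM L1 x y + evalM L2 x y.
Proof. induction L1; simpl. ring. rewrite IHL1. ring. Qed.
Lemma evalM_map m L x y : evalM (map (mulmon m) L) x y = monv m x y * evalM L x y.
Proof. induction L; simpl. ring. rewrite IHL. destruct m as [[c1 i1] j1]. destruct a as [[c2 i2] j2].
  simpl. rewrite !cpown_add. ring. Qed.
Lemma evalM_fm L1 L2 x y : evalM (flat_map (fun m1 => map (mulmon m1) L2) L1) x y = evalM L1 x y * evalM L2 x y.
Proof. induction L1; simpl. ring. rewrite evalM_app, evalM_map, IHL1. ring. Qed.
Lemma mons_ev e x y : evalM (mons e) x y = pev e x y.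
Proof. induction e; simpl; try (simpl; ring).
  - rewrite evalM_app, IHe1, IHe2. reflexivity.
  - rewrite evalM_fm, IHe1, IHe2. reflexivity. Qed.

Fixpoint mdeg (L : list mon) : nat :=
  match L with nil => 0%nat | (c, i, j) :: L' => Nat.max (Nat.max i j) (mdeg L') end.
Fixpoint coefL (L : list mon) (i j : nat) : C :=
  match L with nil => 0
  | (c, a, b) :: L' => (if andb (Nat.eqb a i) (Nat.eqb b j) then c else 0) + coefL L' i j end.

Lemma peval2_lin D (f g : nat -> nat -> C) x y : peval2 (Poly2 D (fun i j => f i j + g i j)) x y =
  peval2 (Poly2 D f) x y + peval2 (Poly2 D g) x y.
Proof. unfold peval2; cbn [deg2 coef2]. rewrite <- csum_add. apply csum_ext. intros i _.
  rewrite <- csum_add. apply csum_ext. intros j _. ring. Qed.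

Lemma peval2_delta D c a b x y : (a <= D)%nat -> (b <= D)%nat ->
  peval2 (Poly2 D (fun i j => if andb (Nat.eqb a i) (Nat.eqb b j) then c else 0)) x y = c * cpown x a * cpown y b.
Proof. intros Ha Hb. unfold peval2; cbn [deg2 coef2].
  rewrite (csum_ext _ _ (fun i => if Nat.eqb a i then c * cpown x i * cpown y b else 0)).
  apply csum_delta; lia.
  intros i _. destruct (Nat.eqb a i) eqn:E; cbn [andb].
  - rewrite (csum_ext _ _ (fun j => if Nat.eqb b j then c * cpown x i * cpown y j else 0)).
    apply csum_delta; lia. intros j _. destruct (Nat.eqb b j); ring.
  - apply csum_zero. intros; ring. Qed.

Lemma peval2_coefL L D x y : (mdeg L <= D)%nat -> peval2 (Poly2 D (coefL L)) x y = evalM L x y.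
Proof. induction L as [|[[c a] b] L IH]; intros H.
  - unfold peval2; cbn [deg2 coef2 evalM]. apply csum_zero. intros; apply csum_zero; intros; cbn [coefL]; ring.
  - simpl in H. simpl. rewrite <- IH by lia.
    rewrite (peval2_lin D (fun i j => if andb (Nat.eqb a i) (Nat.eqb b j) then c else 0) (coefL L)).
    rewrite peval2_delta by lia. reflexivity. Qed.

Definition pe2 (e : pe) : poly2 := Poly2 (mdeg (mons e)) (coefL (mons e)).
Lemma pe2_ev e x y : peval2 (pe2 e) x y = pev e x y.
Proof. unfold pe2. rewrite peval2_coefL by lia. apply mons_ev. Qed.

Lemma pnonzero2_of p x y : peval2 p x y <> 0 -> pnonzero2 p.
Proof. intros H. apply NNPP. intros H'. apply H. unfold peval2. apply csum_zero. intros i Hi.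
  apply csum_zero. intros j Hj. destruct (Ceq_dec (coef2 p i j) 0) as [E|E].
  rewrite E; ring. exfalso. apply H'. exists i, j. repeat split; try lia; auto. Qed.

Definition upoly (d : nat) (c : nat -> C) (y : C) : C := csum (S d) (fun i => c i * cpown y i).

Lemma upoly_S d (c : nat -> C) y : upoly (S d) c y = c 0%nat + y * upoly d (fun i => c (S i)) y.
Proof. unfold upoly. rewrite csum_shift. simpl cpown. rewrite csum_scal. f_equal. ring.
  apply csum_ext. intros. simpl. ring. Qed.

Lemma factor_thm d (c : nat -> C) r : exists c', forall y, upoly (S d) c y = upoly (S d) c r + (y - r) * upoly d c' y.
Proof. revert c. induction d; intros c.
  - exists (fun _ => c 1%nat). intros y. rewrite !upoly_S. unfold upoly. simpl. ring.
  - destruct (IHd (fun i => c (S i))) as [c'' H].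
    exists (fun i => match i with O => upoly (S d) (fun i => c (S i)) r | S i' => c'' i' end).
    intros y. set (cc := fun i => match i with O => upoly (S d) (fun i => c (S i)) r | S i' => c'' i' end).
    rewrite (upoly_S (S d) c y), (upoly_S (S d) c r). rewrite (H y). rewrite (upoly_S d cc y).
    change (upoly d (fun i => cc (S i)) y) with (upoly d c'' y). change (cc 0%nat) with (upoly (S d) (fun i => c (S i)) r). clear cc. ring. Qed.

Lemma ZC_add a b : ZC (a + b) = ZC a + ZC b.
Proof. unfold ZC. rewrite plus_IZR, RtoC_plus. reflexivity. Qed.
Lemma ZC_mul a b : ZC (a * b) = ZC a * ZC b.
Proof. unfold ZC. rewrite mult_IZR, RtoC_mult. reflexivity. Qed.
Lemma ZC_opp a : ZC (- a) = - ZC a.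
Proof. unfold ZC. rewrite opp_IZR, RtoC_opp. reflexivity. Qed.
Lemma ZC_1 : ZC 1 = 1.
Proof. reflexivity. Qed.
Lemma ZC_inj a b : ZC a = ZC b -> a = b.
Proof. unfold ZC. intros H. injection H. intros. apply eq_IZR. auto. Qed.

Lemma lemmaZ d : forall (c : nat -> C) (Y0 : Z), (forall k, (Y0 <= k)%Z -> upoly d c (ZC k) = 0) ->
  forall y, upoly d c y = 0.
Proof. induction d; intros c Y0 H y.
  - pose proof (H Y0 (Z.le_refl _)). unfold upoly in *. simpl in *. rewrite Cmult_1_r in *. rewrite Cplus_0_l in *. auto.
  - destruct (factor_thm d c (ZC Y0)) as [c' Hc'].
    assert (Hr : upoly (S d) c (ZC Y0) = 0) by (apply H; lia).
    assert (Hq : forall y, upoly d c' y = 0).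
    { apply (IHd c' (Y0 + 1)%Z). intros k Hk. pose proof (H k ltac:(lia)) as Hk0.
      rewrite Hc', Hr in Hk0. 
      assert (ZC k - ZC Y0 <> 0). { intro E. assert (ZC k = ZC Y0) by (apply Cminus_eq_0; auto). apply ZC_inj in H0. lia. }
      destruct (Cmult_integral _ _ (eq_trans (eq_sym (Cplus_0_l _)) Hk0)) as [E|E]; [contradiction|auto]. }
    rewrite Hc', Hr, Hq. ring. Qed.

Fixpoint coefU (L : list mon) (x : C) (j : nat) : C :=
  match L with nil => 0
  | (c, a, b) :: L' => (if Nat.eqb b j then c * cpown x a else 0) + coefU L' x j end.

Lemma upoly_coefU L D x y : (mdeg L <= D)%nat -> upoly D (coefU L x) y = evalM L x y.
Proof. induction L as [|[[c a] b] L IH]; intros H.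
  - unfold upoly. cbn [coefU evalM]. apply csum_zero. intros; ring.
  - simpl in H. cbn [coefU evalM]. rewrite <- IH by lia. unfold upoly.
    rewrite (csum_ext _ _ (fun i => (if Nat.eqb b i then c * cpown x a * cpown y i else 0) + coefU L x i * cpown y i)).
    rewrite csum_add, csum_delta by lia. unfold monv. ring.
    intros i _. destruct (Nat.eqb b i); ring. Qed.

Lemma pe_upoly e x : exists d c, forall y, pev e x y = upoly d c y.
Proof. exists (mdeg (mons e)), (coefU (mons e) x). intros y. rewrite upoly_coefU by lia.
  rewrite mons_ev. reflexivity. Qed.

Lemma ev_nonzero (e : pe) (n0 k0 : Z) : pev e (ZC n0) (ZC k0) <> 0 ->
  forall Y0, exists k, (Y0 <= k)%Z /\ pev e (ZC n0) (ZC k) <> 0.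
Proof. intros H Y0. destruct (pe_upoly e (ZC n0)) as [d [c Hc]].
  apply NNPP. intros H'. apply H. rewrite Hc. apply (lemmaZ d c Y0).
  intros k Hk. rewrite <- Hc. apply NNPP. intros H2. apply H'. exists k. split; auto. Qed.

Definition EvNZ (q : pe) : Prop :=
  forall n0 : Z, exists Y0 : Z, forall k, (Y0 <= k)%Z -> pev q (ZC n0) (ZC k) <> 0.

Lemma hyp2_of (f : pe) (Bf : Z -> Z -> C) (qn pn qk pk : pe) :
  (forall n k, pev qn (ZC n) (ZC k) * Bf (n + 1)%Z k = pev pn (ZC n) (ZC k) * Bf n k) -> EvNZ qn ->
  (forall n k, pev qk (ZC n) (ZC k) * Bf n (k + 1)%Z = pev pk (ZC n) (ZC k) * Bf n k) -> EvNZ qk ->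
  hypergeometric2 (fun n k => pev f (ZC n) (ZC k) * Bf n k).
Proof. intros Hn Nn Hk Nk.
  destruct (classic (exists n0 k0, pev f (ZC n0) (ZC k0) <> 0)) as [[n0 [k0 Hf]]|Hz].
  - split.
    + exists (pe2 (PMul (shiftX f) pn)), (pe2 (PMul f qn)). split.
      * destruct (Nn n0) as [Y0 HY]. destruct (ev_nonzero f n0 k0 Hf Y0) as [k [Hk1 Hk2]].
        apply (pnonzero2_of _ (ZC n0) (ZC k)). rewrite pe2_ev. simpl. apply Cmult_neq0; auto.
      * intros n k. rewrite !pe2_ev. simpl. rewrite shiftX_ev. rewrite ZC_add, ZC_1.
        transitivity (pev f (ZC n + 1) (ZC k) * (pev f (ZC n) (ZC k) * (pev qn (ZC n) (ZC k) * Bf (n + 1)%Z k))). ring.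
        rewrite Hn. ring.
    + exists (pe2 (PMul (shiftY f) pk)), (pe2 (PMul f qk)). split.
      * destruct (Nk n0) as [Y0 HY]. destruct (ev_nonzero f n0 k0 Hf Y0) as [k [Hk1 Hk2]].
        apply (pnonzero2_of _ (ZC n0) (ZC k)). rewrite pe2_ev. simpl. apply Cmult_neq0; auto.
      * intros n k. rewrite !pe2_ev. simpl. rewrite shiftY_ev. rewrite ZC_add, ZC_1.
        transitivity (pev f (ZC n) (ZC k + 1) * (pev f (ZC n) (ZC k) * (pev qk (ZC n) (ZC k) * Bf n (k + 1)%Z))). ring.
        rewrite Hk. ring.
  - assert (Z0 : forall n k, pev f (ZC n) (ZC k) = 0).
    { intros n k. apply NNPP. intros H. apply Hz. exists n, k. auto. }
    split; exists (pe2 (PC 0)), (pe2 (PC 1)); split;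
      try (apply (pnonzero2_of _ 0 0); rewrite pe2_ev; simpl; apply C1_neq0);
      intros n k; rewrite !pe2_ev; simpl; rewrite !Z0; ring.
Qed.

Definition NC (m : nat) : C := RtoC (INR m).

Lemma NC_Z (v : Z) : (0 <= v)%Z -> NC (Z.to_nat v) = ZC v.
Proof. intros H. unfold NC, ZC. rewrite INR_IZR_INZ, Z2Nat.id by auto. reflexivity. Qed.
Lemma ZC_nat (m : nat) : ZC (Z.of_nat m) = NC m.
Proof. unfold NC, ZC. rewrite INR_IZR_INZ. reflexivity. Qed.




Definition qCz (d : Z) (u : C) : C := if (d <? 0)%Z then u ^ Z.to_nat (- d) else 1.
Definition pCz (d : Z) (u : C) : C := if (d <? 0)%Z then 1 else u ^ Z.to_nat d.
Definition qGm (d : Z) (x : C) : C := if (d <? 0)%Z then poch (x + ZC d) (Z.to_nat (- d)) else 1.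
Definition pGm (d : Z) (x : C) : C := if (d <? 0)%Z then 1 else poch x (Z.to_nat d).
Definition qRm (d : Z) (y : C) : C := if (d <? 0)%Z then 1 else poch y (Z.to_nat d).
Definition pRm (d : Z) (y : C) : C := if (d <? 0)%Z then poch (y + ZC d) (Z.to_nat (- d)) else 1.

Lemma cpowRel (L e : C) (d : Z) : qCz d (Cexp L) * cpow L (e + ZC d) = pCz d (Cexp L) * cpow L e.
Proof. unfold qCz, pCz. destruct (Z.ltb_spec d 0).
  - replace e with ((e + ZC d) + NC (Z.to_nat (- d))) at 2 by (rewrite NC_Z by lia; rewrite ZC_opp; ring).
    unfold NC. rewrite cpow_add_nat. ring.
  - replace (e + ZC d) with (e + NC (Z.to_nat d)) by (rewrite NC_Z by lia; reflexivity).
    unfold NC. rewrite cpow_add_nat. ring. Qed.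

Lemma GamRel (x : C) (d : Z) : (forall j : Z, x + ZC j <> 0) \/ d = 0%Z ->
  qGm d x * Gamma (x + ZC d) = pGm d x * Gamma x.
Proof. intros H. unfold qGm, pGm. destruct (Z.ltb_spec d 0).
  - destruct H as [H|H]; [|lia].
    replace x with ((x + ZC d) + NC (Z.to_nat (- d))) at 3 by (rewrite NC_Z by lia; rewrite ZC_opp; ring).
    unfold NC. rewrite Gamma_poch. ring.
    intros j Hj. replace (x + ZC d + RtoC (INR j)) with (x + ZC (d + Z.of_nat j)) by (rewrite ZC_add, ZC_nat; unfold NC; ring). apply H.
  - replace (x + ZC d) with (x + NC (Z.to_nat d)) by (rewrite NC_Z by lia; reflexivity).
    unfold NC. rewrite Gamma_poch. ring.
    intros j Hj. destruct H as [H|H]. replace (x + RtoC (INR j)) with (x + ZC (Z.of_nat j)) by (rewrite ZC_nat; reflexivity). apply H.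
    subst. simpl in Hj. lia. Qed.

Lemma RGRel (y : C) (d : Z) : qRm d y * RGamma (y + ZC d) = pRm d y * RGamma y.
Proof. unfold qRm, pRm. destruct (Z.ltb_spec d 0).
  - rewrite (RGamma_poch (y + ZC d) (Z.to_nat (- d))). fold (NC (Z.to_nat (- d))). rewrite NC_Z by lia.
    rewrite ZC_opp. replace (y + ZC d + - ZC d) with y by ring. ring.
  - rewrite (RGamma_poch y (Z.to_nat d)). fold (NC (Z.to_nat d)). rewrite NC_Z by lia. ring. Qed.


Fixpoint pochE (e : pe) (m : nat) : pe :=
  match m with O => PC 1 | S m' => PMul (pochE e m') (PAdd e (PC (NC m'))) end.
Lemma pochE_ev e m x y : pev (pochE e m) x y = poch (pev e x y) m.
Proof. induction m; simpl. reflexivity. rewrite IHm. reflexivity. Qed.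

Definition qGmE (d : Z) (e : pe) : pe := if (d <? 0)%Z then pochE (PAdd e (PC (ZC d))) (Z.to_nat (- d)) else PC 1.
Definition pGmE (d : Z) (e : pe) : pe := if (d <? 0)%Z then PC 1 else pochE e (Z.to_nat d).
Definition qRmE (d : Z) (e : pe) : pe := if (d <? 0)%Z then PC 1 else pochE e (Z.to_nat d).
Definition pRmE (d : Z) (e : pe) : pe := if (d <? 0)%Z then pochE (PAdd e (PC (ZC d))) (Z.to_nat (- d)) else PC 1.
Lemma qGmE_ev d e x y : pev (qGmE d e) x y = qGm d (pev e x y).
Proof. unfold qGmE, qGm. destruct (d <? 0)%Z; [rewrite pochE_ev|]; reflexivity. Qed.
Lemma pGmE_ev d e x y : pev (pGmE d e) x y = pGm d (pev e x y).
Proof. unfold pGmE, pGm. destruct (d <? 0)%Z; [|rewrite pochE_ev]; reflexivity. Qed.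
Lemma qRmE_ev d e x y : pev (qRmE d e) x y = qRm d (pev e x y).
Proof. unfold qRmE, qRm. destruct (d <? 0)%Z; [|rewrite pochE_ev]; reflexivity. Qed.
Lemma pRmE_ev d e x y : pev (pRmE d e) x y = pRm d (pev e x y).
Proof. unfold pRmE, pRm. destruct (d <? 0)%Z; [rewrite pochE_ev|]; reflexivity. Qed.

Definition AllNZ (e : pe) : Prop := forall n k, pev e (ZC n) (ZC k) <> 0.
Lemma EvNZ_of_All e : AllNZ e -> EvNZ e.
Proof. intros H n0. exists 0%Z. intros k _. apply H. Qed.
Lemma EvNZ_mul p q : EvNZ p -> EvNZ q -> EvNZ (PMul p q).
Proof. intros Hp Hq n0. destruct (Hp n0) as [Y1 H1]. destruct (Hq n0) as [Y2 H2].
  exists (Z.max Y1 Y2). intros k Hk. cbn [pev]. apply Cmult_neq0; [apply H1|apply H2]; lia. Qed.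
Lemma AllNZ_PC (c : C) : c <> 0 -> AllNZ (PC c).
Proof. intros H n k. cbn [pev]. exact H. Qed.
Lemma poch_neq0 (s : C) m : (forall j, (j < m)%nat -> s + NC j <> 0) -> poch s m <> 0.
Proof. induction m; intros H; simpl. apply C1_neq0. apply Cmult_neq0. apply IHm; intros; apply H; lia. apply H; lia. Qed.
Lemma AllNZ_pochE e m : (forall n k (j : nat), pev e (ZC n) (ZC k) + NC j <> 0) -> AllNZ (pochE e m).
Proof. intros H n k. rewrite pochE_ev. apply poch_neq0. intros; apply H. Qed.
Lemma EvNZ_pochE_Y e m (g : Z -> C) : (forall n k, pev e (ZC n) (ZC k) = ZC k + g n) -> EvNZ (pochE e m).
Proof. intros H n0. exists (up (Cmod (g n0))). intros k Hk. rewrite pochE_ev. apply poch_neq0.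
  intros j _. rewrite H. intros E. 
  assert (Re (ZC k + g n0 + NC j) = 0%R) by (rewrite E; reflexivity).
  unfold ZC, NC in H0. simpl in H0.
  destruct (archimed (Cmod (g n0))) as [A1 _]. apply IZR_le in Hk.
  pose proof (re_le_Cmod (g n0)). apply Rabs_le_between in H1. pose proof (pos_INR j). unfold Re in *. lra. Qed.
Lemma Cpow_neq0 (u : C) m : u <> 0 -> u ^ m <> 0.
Proof. intros H. induction m; simpl. apply C1_neq0. apply Cmult_neq0; auto. Qed.

Lemma hyp2_ext (F G : Z -> Z -> C) : (forall n k, F n k = G n k) -> hypergeometric2 G -> hypergeometric2 F.
Proof. intros H [[P [Q [HQ HR]]] [P' [Q' [HQ' HR']]]]. split.
  exists P, Q. split; auto. intros n k. rewrite !H. apply HR.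
  exists P', Q'. split; auto. intros n k. rewrite !H. apply HR'. Qed.

Lemma poch1 (s : C) : poch s 1 = s.
Proof. change (poch s 1) with (1 * (s + RtoC (INR 0))). rewrite INR_0. ring. Qed.
Inductive step : Type := Kp | Km | Ap | Am | Bp | Bm.

Section Main.
Variable z Lz Lw : C.
Hypothesis hz0 : z <> 0.
Hypothesis hz1 : z <> 1.
Hypothesis hLz : Cexp Lz = z.
Hypothesis hLw : Cexp Lw = z - 1.

Lemma hz1' : z - 1 <> 0.
Proof. intro H; apply hz1; replace z with ((z - 1) + 1) by ring; rewrite H; ring. Qed.

Definition cA : C := z / (z - 1).
Definition dB : C := - / (z - 1).

Definition F00 (X W : C) : C :=
  cpow Lz (X + W) * cpow Lw (- W) * Gamma X * RGamma (X + W) * Gamma W.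

Lemma IdA (X W : C) : X <> 0 -> W - 1 <> 0 ->
  F00 (X + 1) (W - 1) - F00 X W = cA * F00 (X + 1) (W - 1) - cA * F00 X (W - 1).
Proof. intros HX HW. set (V := W - 1) in *. replace W with (V + 1) by (unfold V; ring). clearbody V.
  unfold F00.
  replace (X + (V + 1)) with ((X + V) + 1) by ring. replace (X + 1 + V) with ((X + V) + 1) by ring.
  replace (- V) with ((- V - 1) + 1) by ring. replace (- (V + 1)) with (- V - 1) by ring.
  rewrite !cpow_add1, hLz, hLw. rewrite !Gamma_shift1 by auto.
  rewrite <- (RGamma_shift (X + V)). unfold cA. field. apply hz1'. Qed.

Lemma IdB (X W : C) : X <> 0 -> W <> 0 ->
  F00 X (W + 1) - F00 X W = dB * F00 (X + 1) W - dB * F00 X W.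
Proof. intros HX HW. unfold F00.
  replace (X + (W + 1)) with ((X + W) + 1) by ring. replace (X + 1 + W) with ((X + W) + 1) by ring.
  replace (- W) with ((- W - 1) + 1) by ring. replace (- (W + 1)) with (- W - 1) by ring.
  rewrite !cpow_add1, hLz, hLw. rewrite !Gamma_shift1 by auto.
  rewrite <- (RGamma_shift (X + W)). unfold dB. field. apply hz1'. Qed.


Definition oadd (o p : Z * Z) : Z * Z := ((fst o + fst p)%Z, (snd o + snd p)%Z).

Definition Fo (o : Z * Z) (X W : C) : C := F00 (X + ZC (fst o)) (W + ZC (snd o)).

Lemma Fo_oadd o p X W : Fo (oadd o p) X W = Fo p (X + ZC (fst o)) (W + ZC (snd o)).
Proof. unfold Fo, oadd. cbn [fst snd]. rewrite !ZC_add. f_equal; ring. Qed.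

Lemma ZC_0 : ZC 0 = 0. Proof. reflexivity. Qed.
Lemma ZC_m1 : ZC (-1) = - (1). Proof. unfold ZC. change (IZR (-1)) with (- IZR 1)%R. rewrite RtoC_opp. reflexivity. Qed.

Definition dlt (s : step) : Z * Z :=
  match s with Kp => (1, 0) | Km => (-1, 0) | Ap => (1, -1) | Am => (-1, 1) | Bp => (0, 1) | Bm => (0, -1) end%Z.
Definition mcoef (s : step) : C :=
  match s with Kp => 1 | Km => - (1) | Ap => cA | Am => - cA | Bp => dB | Bm => - dB end.
Definition moff (s : step) : Z * Z :=
  match s with Kp => (0, 0) | Km => (-1, 0) | Ap => (0, -1) | Am => (-1, 0) | Bp => (0, 0) | Bm => (0, -1) end%Z.

Lemma step_id (s : step) (X W : C) :
  X + ZC (fst (moff s)) <> 0 -> W + ZC (snd (moff s)) <> 0 ->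
  Fo (dlt s) X W - Fo (0, 0)%Z X W = mcoef s * Fo (moff s) (X + 1) W - mcoef s * Fo (moff s) X W.
Proof. intros H1 H2. destruct s; unfold Fo, dlt, moff, mcoef in *; cbn [fst snd] in *;
  rewrite ?ZC_0, ?ZC_1, ?ZC_m1 in *.
  - replace (X + 0 + 1) with (X + 1) by ring. replace (X + 1 + 0) with (X + 1) by ring. ring.
  - replace (X + 1 + - (1)) with (X + 0) by ring. ring.
  - replace (X + 1 + 0) with (X + 1) by ring. replace (W + - (1)) with (W + 0 - 1) by ring.
    replace (X + 0 + 1) with (X + 1) by ring. replace (X + 0) with X in * by ring. replace (W + 0) with W by ring.
    apply IdA; auto. replace (W - 1) with (W + - (1)) by ring. auto.
  -
    pose proof (IdA (X + - (1)) (W + 1) H1 ltac:(replace (W + 1 - 1) with (W + 0) by ring; auto)) as I.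
    replace (X + - (1) + 1) with (X + 0) in I by ring. replace (W + 1 - 1) with (W + 0) in I by ring.
    replace (X + 1 + - (1)) with (X + 0) by ring.
    transitivity (- (F00 (X + 0) (W + 0) - F00 (X + - (1)) (W + 1))). ring. rewrite I. ring.
  - replace (X + 0 + 1) with (X + 1) by ring. replace (X + 1 + 0) with (X + 1) by ring.
    replace (X + 0) with X in * by ring. replace (W + 0) with W in * by ring.
    apply IdB; auto.
  - pose proof (IdB (X + 0) (W + - (1)) H1 H2) as I.
    replace (W + - (1) + 1) with (W + 0) in I by ring.
    replace (X + 1 + 0) with (X + 0 + 1) by ring.
    transitivity (- (F00 (X + 0) (W + 0) - F00 (X + 0) (W + - (1)))). ring. rewrite I. ring.
Qed.

Fixpoint termsW (w : list step) (o : Z * Z) : list (C * (Z * Z)) :=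
  match w with nil => nil | s :: w' => (mcoef s, oadd o (moff s)) :: termsW w' (oadd o (dlt s)) end.
Fixpoint dltW (w : list step) : Z * Z :=
  match w with nil => (0, 0)%Z | s :: w' => oadd (dlt s) (dltW w') end.
Fixpoint evalTL (tl : list (C * (Z * Z))) (X W : C) : C :=
  match tl with nil => 0 | (c, o) :: tl' => c * Fo o X W + evalTL tl' X W end.
Definition termOK (X W : C) (tl : list (C * (Z * Z))) : Prop :=
  forall c o, In (c, o) tl -> X + ZC (fst o) <> 0 /\ W + ZC (snd o) <> 0.

Lemma oadd_assoc o p q : oadd o (oadd p q) = oadd (oadd o p) q.
Proof. unfold oadd; cbn [fst snd]. f_equal; lia. Qed.
Lemma oadd_0 o : oadd o (0, 0)%Z = o.
Proof. destruct o; unfold oadd; cbn [fst snd]. f_equal; lia. Qed.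

Lemma word_id (w : list step) : forall o X W, termOK X W (termsW w o) ->
  Fo (oadd o (dltW w)) X W - Fo o X W = evalTL (termsW w o) (X + 1) W - evalTL (termsW w o) X W.
Proof. induction w as [|s w IH]; intros o X W Hok.
  - simpl. rewrite oadd_0. ring.
  - cbn [termsW evalTL dltW]. rewrite oadd_assoc.
    assert (Hok' : termOK X W (termsW w (oadd o (dlt s)))) by (intros c p Hp; apply (Hok c p); simpl; right; auto).
    specialize (IH (oadd o (dlt s)) X W Hok').
    assert (Hs : Fo (oadd o (dlt s)) X W - Fo o X W =
       mcoef s * Fo (oadd o (moff s)) (X + 1) W - mcoef s * Fo (oadd o (moff s)) X W).
    { destruct (Hok (mcoef s) (oadd o (moff s)) (or_introl eq_refl)) as [H1 H2].
      rewrite !Fo_oadd. replace (Fo o X W) with (Fo (0,0)%Z (X + ZC (fst o)) (W + ZC (snd o))).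
      replace (X + 1 + ZC (fst o)) with (X + ZC (fst o) + 1) by ring.
      apply step_id. unfold oadd in H1; cbn [fst snd] in H1; rewrite ZC_add in H1. replace (X + ZC (fst o) + ZC (fst (moff s))) with (X + (ZC (fst o) + ZC (fst (moff s)))) by ring. auto.
      unfold oadd in H2; cbn [fst snd] in H2; rewrite ZC_add in H2. replace (W + ZC (snd o) + ZC (snd (moff s))) with (W + (ZC (snd o) + ZC (snd (moff s)))) by ring. auto.
      unfold Fo; cbn [fst snd]. rewrite ZC_0. f_equal; ring. }
    transitivity ((Fo (oadd (oadd o (dlt s)) (dltW w)) X W - Fo (oadd o (dlt s)) X W) + (Fo (oadd o (dlt s)) X W - Fo o X W)). ring.
    rewrite IH, Hs. ring.
Qed.


Definition Base (M E : nat) (X W : C) : C :=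
  cpow Lz (X + W - NC M) * cpow Lw (- W - NC M) * Gamma (X - NC M) * RGamma (X + W + NC M) * Gamma (W - NC E).

Definition Tval (M E : nat) (t : Z * Z) (X W : C) : C :=
  let t1 := fst t in let t3 := snd t in
  z ^ (Z.to_nat (t1 + t3 + Z.of_nat M)) * (z - 1) ^ (Z.to_nat (Z.of_nat M - t3)) *
  poch (X - NC M) (Z.to_nat (t1 + Z.of_nat M)) *
  poch (X + W + ZC (t1 + t3)) (Z.to_nat (Z.of_nat M - t1 - t3)) *
  poch (W - NC E) (Z.to_nat (t3 + Z.of_nat E)).

Lemma Fo_base (M E : nat) (t : Z * Z) (X W : C) :
  let t1 := fst t in let t3 := snd t in
  (0 <= t1 + t3 + Z.of_nat M)%Z -> (0 <= Z.of_nat M - t3)%Z -> (0 <= t1 + Z.of_nat M)%Z ->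
  (0 <= Z.of_nat M - t1 - t3)%Z -> (0 <= t3 + Z.of_nat E)%Z ->
  (forall j, (j < Z.to_nat (t1 + Z.of_nat M))%nat -> X - NC M + NC j <> 0) ->
  (forall j, (j < Z.to_nat (t3 + Z.of_nat E))%nat -> W - NC E + NC j <> 0) ->
  Fo t X W = Tval M E t X W * Base M E X W.
Proof. intros t1 t3 b1 b2 b3 b4 b5 c1 c3. unfold Fo, F00, Tval, Base. fold t1 t3.
  assert (E1 : X + ZC t1 + (W + ZC t3) = (X + W - NC M) + NC (Z.to_nat (t1 + t3 + Z.of_nat M))).
  { rewrite NC_Z by auto. rewrite !ZC_add, ZC_nat. ring. }
  assert (E2 : - (W + ZC t3) = (- W - NC M) + NC (Z.to_nat (Z.of_nat M - t3))).
  { rewrite NC_Z by auto. unfold Z.sub. rewrite !ZC_add, ZC_opp, ZC_nat. ring. }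
  assert (E3 : X + ZC t1 = (X - NC M) + NC (Z.to_nat (t1 + Z.of_nat M))).
  { rewrite NC_Z by auto. rewrite !ZC_add, ZC_nat. ring. }
  assert (E4 : X + W + NC M = (X + W + ZC (t1 + t3)) + NC (Z.to_nat (Z.of_nat M - t1 - t3))).
  { rewrite NC_Z by auto. unfold Z.sub. rewrite !ZC_add, !ZC_opp, ZC_nat. ring. }
  assert (E5 : W + ZC t3 = (W - NC E) + NC (Z.to_nat (t3 + Z.of_nat E))).
  { rewrite NC_Z by auto. rewrite !ZC_add, ZC_nat. ring. }
  replace (RGamma (X + ZC t1 + (W + ZC t3))) with (poch (X + W + ZC (t1 + t3)) (Z.to_nat (Z.of_nat M - t1 - t3)) * RGamma (X + W + NC M)).
  2:{ rewrite E4. unfold NC. rewrite <- RGamma_poch. f_equal. rewrite ZC_add. ring. }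
  rewrite E1, E2, E3, E5. unfold NC in *.
  rewrite !cpow_add_nat, hLz, hLw.
  rewrite !Gamma_poch by auto.
  ring. Qed.


Lemma Base_k (M E : nat) (X W : C) : X - NC M <> 0 ->
  (X + W + NC M) * Base M E (X + 1) W = (z * (X - NC M)) * Base M E X W.
Proof. intros H. unfold Base.
  replace (X + 1 + W - NC M) with ((X + W - NC M) + 1) by ring.
  replace (X + 1 - NC M) with ((X - NC M) + 1) by ring.
  replace (X + 1 + W + NC M) with ((X + W + NC M) + 1) by ring.
  rewrite cpow_add1, hLz, Gamma_shift1 by auto. rewrite <- (RGamma_shift (X + W + NC M)). ring. Qed.


Definition QBv (M E : nat) (dX dW : Z) (X W : C) : C :=
  qCz (dX + dW) z * qCz (- dW) (z - 1) * qGm dX (X - NC M) * qRm (dX + dW) (X + W + NC M) * qGm dW (W - NC E).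
Definition PBv (M E : nat) (dX dW : Z) (X W : C) : C :=
  pCz (dX + dW) z * pCz (- dW) (z - 1) * pGm dX (X - NC M) * pRm (dX + dW) (X + W + NC M) * pGm dW (W - NC E).

Lemma Base_n (M E : nat) (dX dW : Z) (X W : C) :
  ((forall j, X - NC M + ZC j <> 0) \/ dX = 0%Z) -> ((forall j, W - NC E + ZC j <> 0) \/ dW = 0%Z) ->
  QBv M E dX dW X W * Base M E (X + ZC dX) (W + ZC dW) = PBv M E dX dW X W * Base M E X W.
Proof. intros HX HW. unfold Base, QBv, PBv.
  replace (X + ZC dX + (W + ZC dW) - NC M) with ((X + W - NC M) + ZC (dX + dW)) by (rewrite ZC_add; ring).
  replace (- (W + ZC dW) - NC M) with ((- W - NC M) + ZC (- dW)) by (rewrite ZC_opp; ring).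
  replace (X + ZC dX - NC M) with ((X - NC M) + ZC dX) by ring.
  replace (X + ZC dX + (W + ZC dW) + NC M) with ((X + W + NC M) + ZC (dX + dW)) by (rewrite ZC_add; ring).
  replace (W + ZC dW - NC E) with ((W - NC E) + ZC dW) by ring.
  pose proof (cpowRel Lz (X + W - NC M) (dX + dW)) as R1. rewrite hLz in R1.
  pose proof (cpowRel Lw (- W - NC M) (- dW)) as R2. rewrite hLw in R2.
  pose proof (GamRel (X - NC M) dX HX) as R3.
  pose proof (RGRel (X + W + NC M) (dX + dW)) as R4.
  pose proof (GamRel (W - NC E) dW HW) as R5.
  set (f1 := cpow Lz (X + W - NC M + ZC (dX + dW))) in *.
  set (f2 := cpow Lw (- W - NC M + ZC (- dW))) in *.
  set (f3 := Gamma (X - NC M + ZC dX)) in *.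
  set (f4 := RGamma (X + W + NC M + ZC (dX + dW))) in *.
  set (f5 := Gamma (W - NC E + ZC dW)) in *.
  transitivity ((qCz (dX + dW) z * f1) * (qCz (- dW) (z - 1) * f2) * (qGm dX (X - NC M) * f3) *
     (qRm (dX + dW) (X + W + NC M) * f4) * (qGm dW (W - NC E) * f5)). ring.
  rewrite R1, R2, R3, R4, R5. ring. Qed.

Definition TpeE (M E : nat) (t : Z * Z) (Xe We : pe) : pe :=
  let t1 := fst t in let t3 := snd t in
  PMul (PMul (PMul (PMul (PC (z ^ (Z.to_nat (t1 + t3 + Z.of_nat M)))) (PC ((z - 1) ^ (Z.to_nat (Z.of_nat M - t3)))))
    (pochE (PAdd Xe (PC (- NC M))) (Z.to_nat (t1 + Z.of_nat M))))
    (pochE (PAdd (PAdd Xe We) (PC (ZC (t1 + t3)))) (Z.to_nat (Z.of_nat M - t1 - t3))))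
    (pochE (PAdd We (PC (- NC E))) (Z.to_nat (t3 + Z.of_nat E))).

Lemma TpeE_ev M E t Xe We x y : pev (TpeE M E t Xe We) x y = Tval M E t (pev Xe x y) (pev We x y).
Proof. unfold TpeE, Tval. cbn [pev]. rewrite !pochE_ev. cbn [pev]. reflexivity. Qed.

Fixpoint fpe (M E : nat) (tl : list (C * (Z * Z))) (Xe We : pe) : pe :=
  match tl with nil => PC 0 | (c, t) :: tl' => PAdd (PMul (PC c) (TpeE M E t Xe We)) (fpe M E tl' Xe We) end.

Definition TC (M E : nat) (X W : C) (t : Z * Z) : Prop :=
  let t1 := fst t in let t3 := snd t in
  (0 <= t1 + t3 + Z.of_nat M)%Z /\ (0 <= Z.of_nat M - t3)%Z /\ (0 <= t1 + Z.of_nat M)%Z /\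
  (0 <= Z.of_nat M - t1 - t3)%Z /\ (0 <= t3 + Z.of_nat E)%Z /\
  (forall j, (j < Z.to_nat (t1 + Z.of_nat M))%nat -> X - NC M + NC j <> 0) /\
  (forall j, (j < Z.to_nat (t3 + Z.of_nat E))%nat -> W - NC E + NC j <> 0).

Lemma fpe_ev M E tl Xe We x y : (forall c t, In (c, t) tl -> TC M E (pev Xe x y) (pev We x y) t) ->
  pev (fpe M E tl Xe We) x y * Base M E (pev Xe x y) (pev We x y) = evalTL tl (pev Xe x y) (pev We x y).
Proof. induction tl as [|[c t] tl IH]; intros H; cbn [fpe pev evalTL]. ring.
  rewrite <- IH by (intros; eapply H; right; eauto).
  destruct (H c t (or_introl eq_refl)) as [b1 [b2 [b3 [b4 [b5 [c1 c3]]]]]].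
  rewrite (Fo_base M E t) by auto. rewrite TpeE_ev. ring. Qed.

Definition QBe (M E : nat) (dX dW : Z) (Xe We : pe) : pe :=
  PMul (PMul (PMul (PMul (PC (qCz (dX + dW) z)) (PC (qCz (- dW) (z - 1))))
    (qGmE dX (PAdd Xe (PC (- NC M))))) (qRmE (dX + dW) (PAdd (PAdd Xe We) (PC (NC M)))))
    (qGmE dW (PAdd We (PC (- NC E)))).
Definition PBe (M E : nat) (dX dW : Z) (Xe We : pe) : pe :=
  PMul (PMul (PMul (PMul (PC (pCz (dX + dW) z)) (PC (pCz (- dW) (z - 1))))
    (pGmE dX (PAdd Xe (PC (- NC M))))) (pRmE (dX + dW) (PAdd (PAdd Xe We) (PC (NC M)))))
    (pGmE dW (PAdd We (PC (- NC E)))).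

Lemma QBe_ev M E dX dW Xe We x y : pev (QBe M E dX dW Xe We) x y = QBv M E dX dW (pev Xe x y) (pev We x y).
Proof. unfold QBe, QBv. cbn [pev]. rewrite !qGmE_ev, qRmE_ev. reflexivity. Qed.
Lemma PBe_ev M E dX dW Xe We x y : pev (PBe M E dX dW Xe We) x y = PBv M E dX dW (pev Xe x y) (pev We x y).
Proof. unfold PBe, PBv. cbn [pev]. rewrite !pGmE_ev, pRmE_ev. reflexivity. Qed.

Lemma qCz_neq0 d (u : C) : u <> 0 -> qCz d u <> 0.
Proof. intros H. unfold qCz. destruct (d <? 0)%Z. apply Cpow_neq0; auto. apply C1_neq0. Qed.

Lemma hypTL (M E : nat) (tl : list (C * (Z * Z))) (Xe We : pe) (dX dW : Z) (g : Z -> C) :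
  (forall n k, pev Xe (ZC (n + 1)) (ZC k) = pev Xe (ZC n) (ZC k) + ZC dX) ->
  (forall n k, pev We (ZC (n + 1)) (ZC k) = pev We (ZC n) (ZC k) + ZC dW) ->
  (forall n k, pev Xe (ZC n) (ZC (k + 1)) = pev Xe (ZC n) (ZC k) + 1) ->
  (forall n k, pev We (ZC n) (ZC (k + 1)) = pev We (ZC n) (ZC k)) ->
  (forall n k, pev (PAdd (PAdd Xe We) (PC (NC M))) (ZC n) (ZC k) = ZC k + g n) ->
  (forall n k j, pev Xe (ZC n) (ZC k) + ZC j <> 0) ->
  ((forall n k j, pev We (ZC n) (ZC k) - NC E + ZC j <> 0) \/ dW = 0%Z) ->
  (forall n k c t, In (c, t) tl -> TC M E (pev Xe (ZC n) (ZC k)) (pev We (ZC n) (ZC k)) t) ->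
  hypergeometric2 (fun n k => evalTL tl (pev Xe (ZC n) (ZC k)) (pev We (ZC n) (ZC k))).
Proof. intros HXn HWn HXk HWk HY HX HW HT.
  apply (hyp2_ext _ (fun n k => pev (fpe M E tl Xe We) (ZC n) (ZC k) *
     Base M E (pev Xe (ZC n) (ZC k)) (pev We (ZC n) (ZC k)))).
  { intros n k. rewrite fpe_ev; auto. intros c t Hin. apply (HT n k c t Hin). }
  apply (hyp2_of (fpe M E tl Xe We) (fun n k => Base M E (pev Xe (ZC n) (ZC k)) (pev We (ZC n) (ZC k)))
    (QBe M E dX dW Xe We) (PBe M E dX dW Xe We)
    (pochE (PAdd (PAdd Xe We) (PC (NC M))) 1) (PMul (PC z) (PAdd Xe (PC (- NC M))))).
  - intros n k. rewrite QBe_ev, PBe_ev, HXn, HWn. apply Base_n.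
    + left. intros j. replace (pev Xe (ZC n) (ZC k) - NC M + ZC j) with (pev Xe (ZC n) (ZC k) + ZC (j - Z.of_nat M))
        by (unfold Z.sub; rewrite ZC_add, ZC_opp, ZC_nat; ring). apply HX.
    + destruct HW as [HW|HW]; [left; intros j; apply (HW n k j)|right; auto].
  - repeat apply EvNZ_mul.
    + apply EvNZ_of_All, AllNZ_PC, qCz_neq0; auto.
    + apply EvNZ_of_All, AllNZ_PC, qCz_neq0. apply hz1'.
    + unfold qGmE. destruct (dX <? 0)%Z.
      * apply EvNZ_of_All, AllNZ_pochE. intros n k j. cbn [pev].
        replace (pev Xe (ZC n) (ZC k) + - NC M + ZC dX + NC j) with (pev Xe (ZC n) (ZC k) + ZC (dX - Z.of_nat M + Z.of_nat j))
          by (unfold Z.sub; rewrite !ZC_add, ZC_opp, !ZC_nat; ring). apply HX.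
      * apply EvNZ_of_All, AllNZ_PC, C1_neq0.
    + unfold qRmE. destruct (dX + dW <? 0)%Z.
      * apply EvNZ_of_All, AllNZ_PC, C1_neq0.
      * apply (EvNZ_pochE_Y _ _ g HY).
    + unfold qGmE. destruct (dW <? 0)%Z eqn:Hd.
      * destruct HW as [HW|HW]; [|subst; discriminate].
        apply EvNZ_of_All, AllNZ_pochE. intros n k j. cbn [pev].
        replace (pev We (ZC n) (ZC k) + - NC E + ZC dW + NC j) with (pev We (ZC n) (ZC k) - NC E + ZC (dW + Z.of_nat j))
          by (rewrite !ZC_add, !ZC_nat; ring). apply HW.
      * apply EvNZ_of_All, AllNZ_PC, C1_neq0.
  - intros n k. rewrite HXk, HWk. rewrite pochE_ev, poch1. cbn [pev].
    replace (pev Xe (ZC n) (ZC k) + pev We (ZC n) (ZC k) + NC M) with (pev Xe (ZC n) (ZC k) + pev We (ZC n) (ZC k) + NC M) by ring.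
    apply Base_k. replace (pev Xe (ZC n) (ZC k) - NC M) with (pev Xe (ZC n) (ZC k) + ZC (- Z.of_nat M)) by (rewrite ZC_opp, ZC_nat; ring).
    apply HX.
  - apply (EvNZ_pochE_Y _ _ g HY).
Qed.

Definition ksteps (K : Z) : list step := if (K <? 0)%Z then repeat Km (Z.to_nat (- K)) else repeat Kp (Z.to_nat K).
Definition asteps (A : Z) : list step := if (A <? 0)%Z then repeat Am (Z.to_nat (- A)) else repeat Ap (Z.to_nat A).
Definition bsteps (B : Z) : list step := if (B <? 0)%Z then repeat Bm (Z.to_nat (- B)) else repeat Bp (Z.to_nat B).
Definition word (K A B : Z) : list step :=
  ksteps K ++ (if (0 <=? A)%Z then bsteps B ++ asteps A else asteps A ++ bsteps B).

Lemma dltW_app l1 l2 : dltW (l1 ++ l2) = oadd (dltW l1) (dltW l2).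
Proof. induction l1; simpl. destruct (dltW l2); unfold oadd; simpl; f_equal. rewrite IHl1. apply oadd_assoc. Qed.
Lemma dltW_rep s n : dltW (repeat s n) = ((Z.of_nat n * fst (dlt s))%Z, (Z.of_nat n * snd (dlt s))%Z).
Proof. induction n; cbn [repeat dltW]. reflexivity. rewrite IHn. unfold oadd; cbn [fst snd]. rewrite Nat2Z.inj_succ. f_equal; ring. Qed.

Lemma dltW_word K A B : dltW (word K A B) = ((K + A)%Z, (B - A)%Z).
Proof. unfold word, ksteps, asteps, bsteps.
  destruct (K <? 0)%Z eqn:HK; destruct (0 <=? A)%Z eqn:HA; destruct (A <? 0)%Z eqn:HA'; destruct (B <? 0)%Z eqn:HB;
  rewrite ?Z.ltb_lt, ?Z.ltb_ge, ?Z.leb_le, ?Z.leb_gt in *; try lia;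
  rewrite !dltW_app, !dltW_rep; unfold oadd; simpl; f_equal; rewrite ?Z2Nat.id by lia; lia. Qed.

Lemma termsW_app l1 l2 o : termsW (l1 ++ l2) o = termsW l1 o ++ termsW l2 (oadd o (dltW l1)).
Proof. revert o. induction l1; intros o; simpl. rewrite oadd_0. reflexivity. rewrite IHl1, oadd_assoc. reflexivity. Qed.

Lemma terms_bound w : forall o c t, In (c, t) (termsW w o) ->
  (Z.abs (fst t - fst o) <= Z.of_nat (length w))%Z /\ (Z.abs (snd t - snd o) <= Z.of_nat (length w))%Z.
Proof. induction w as [|s w IH]; intros o c t Hin; simpl in Hin. contradiction.
  destruct Hin as [Hin|Hin].
  - injection Hin; intros; subst. unfold oadd; simpl. destruct s; simpl; lia.
  - destruct (IH _ _ _ Hin) as [H1 H2]. unfold oadd in *; simpl in *. destruct s; simpl in *; lia. Qed.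

Lemma rep_nonneg s n : snd (moff s) = 0%Z -> (0 <= snd (dlt s))%Z -> forall o c t, (0 <= snd o)%Z ->
  In (c, t) (termsW (repeat s n) o) -> (0 <= snd t)%Z.
Proof. intros H1 H2. induction n; intros o c t Ho Hin; simpl in Hin. contradiction.
  destruct Hin as [Hin|Hin]. injection Hin; intros; subst. unfold oadd; simpl. lia.
  eapply IHn; [|exact Hin]. unfold oadd; simpl. lia. Qed.

Lemma rep_down s n : snd (moff s) = (-1)%Z -> snd (dlt s) = (-1)%Z -> forall o c t, (Z.of_nat n <= snd o)%Z ->
  In (c, t) (termsW (repeat s n) o) -> (0 <= snd t)%Z.
Proof. intros H1 H2. induction n; intros o c t Ho Hin; simpl in Hin. contradiction.
  destruct Hin as [Hin|Hin]. injection Hin; intros; subst. unfold oadd; simpl. lia.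
  eapply IHn; [|exact Hin]. unfold oadd; simpl. lia. Qed.

Lemma word_t3 K A : forall c t, In (c, t) (termsW (word K A A) (0, 0)%Z) -> (0 <= snd t)%Z.
Proof. intros c t Hin. unfold word in Hin. rewrite !termsW_app in Hin.
  assert (Hk : snd (dltW (ksteps K)) = 0%Z).
  { unfold ksteps. destruct (K <? 0)%Z; rewrite dltW_rep; simpl; lia. }
  apply in_app_or in Hin. destruct Hin as [Hin|Hin].
  { unfold ksteps in Hin. destruct (K <? 0)%Z; eapply rep_nonneg; try eassumption; simpl; lia. }
  set (o1 := oadd (0, 0)%Z (dltW (ksteps K))) in *.
  assert (Ho1 : snd o1 = 0%Z) by (unfold o1, oadd; simpl; lia).
  destruct (0 <=? A)%Z eqn:HA.
  - apply Z.leb_le in HA. rewrite termsW_app in Hin. apply in_app_or in Hin.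
    unfold bsteps, asteps in *. destruct (A <? 0)%Z eqn:HA'; [apply Z.ltb_lt in HA'; lia|].
    destruct Hin as [Hin|Hin].
    + refine (rep_nonneg Bp _ eq_refl _ o1 c t _ Hin); simpl; lia.
    + eapply rep_down; [| | |exact Hin]; try reflexivity. unfold oadd. rewrite dltW_rep. cbn [fst snd dlt].
      rewrite Z2Nat.id by lia. lia.
  - apply Z.leb_gt in HA. rewrite termsW_app in Hin. apply in_app_or in Hin.
    unfold bsteps, asteps in *. destruct (A <? 0)%Z eqn:HA'; [|apply Z.ltb_ge in HA'; lia].
    destruct Hin as [Hin|Hin].
    + refine (rep_nonneg Am _ eq_refl _ o1 c t _ Hin); simpl; lia.
    + eapply rep_down; [| | |exact Hin]; try reflexivity. unfold oadd. rewrite dltW_rep. cbn [fst snd dlt].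
      rewrite Z2Nat.id by lia. lia. Qed.

Lemma not_pole_Z (s : C) (v : Z) : not_pole s -> (v <= 0)%Z -> s <> ZC v.
Proof. intros H Hv E. apply (H (Z.to_nat (- v))). rewrite E. fold (NC (Z.to_nat (- v))). rewrite NC_Z by lia.
  rewrite ZC_opp. ring. Qed.

Lemma main_mate (K A B : Z) (k0 a b : C) :
  (forall n k : Z, F0_seed_dom (ZC K * ZC n + k0 + ZC k) (ZC A * ZC n + a) (ZC B * ZC n + b)) ->
  exists G : Z -> Z -> C,
    WZ_pair (fun n k => F0_seed Lz Lw (ZC K * ZC n + k0 + ZC k) (ZC A * ZC n + a) (ZC B * ZC n + b)) G.
Proof.
  intros Hdom.
  set (Xe := PAdd (PMul (PC (ZC (A + K))) PX) (PAdd PY (PC (a + k0)))).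
  set (We := PAdd (PMul (PC (ZC (B - A))) PX) (PC (b - a))).
  assert (HXev : forall n k, pev Xe (ZC n) (ZC k) = (ZC A * ZC n + a) + (ZC K * ZC n + k0 + ZC k)).
  { intros. unfold Xe. cbn [pev]. rewrite ZC_add. ring. }
  assert (HWev : forall n k, pev We (ZC n) (ZC k) = (ZC B * ZC n + b) - (ZC A * ZC n + a)).
  { intros. unfold We. cbn [pev]. unfold Z.sub. rewrite ZC_add, ZC_opp. ring. }
  assert (HF : forall n k, F0_seed Lz Lw (ZC K * ZC n + k0 + ZC k) (ZC A * ZC n + a) (ZC B * ZC n + b) =
     evalTL ((RtoC 1, (0, 0)%Z) :: nil) (pev Xe (ZC n) (ZC k)) (pev We (ZC n) (ZC k))).
  { intros n k. rewrite F0_alt, HXev, HWev. cbn [evalTL]. unfold Fo, F00. cbn [fst snd]. rewrite ZC_0.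
    set (kk := ZC K * ZC n + k0 + ZC k). set (aa := ZC A * ZC n + a). set (bb := ZC B * ZC n + b).
    replace (aa + kk + 0 + (bb - aa + 0)) with (bb + kk) by ring.
    replace (- (bb - aa + 0)) with (aa - bb) by ring.
    replace (aa + kk + 0) with (aa + kk) by ring. replace (bb - aa + 0) with (bb - aa) by ring. ring. }
  assert (HX : forall n k j, pev Xe (ZC n) (ZC k) + ZC j <> 0).
  { intros n k j. replace (pev Xe (ZC n) (ZC k) + ZC j) with (ZC A * ZC n + a + (ZC K * ZC n + k0 + ZC (k + j)))
      by (rewrite HXev, ZC_add; ring).
    apply not_pole_0. apply (proj1 (Hdom n (k + j)%Z)). }
  assert (HWp : forall n, not_pole (pev We (ZC n) (ZC 0))).
  { intros n. rewrite HWev. apply (proj2 (Hdom n 0%Z)). }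
  assert (HWk0 : forall n k, pev We (ZC n) (ZC k) = pev We (ZC n) (ZC 0)) by (intros; unfold We; reflexivity).
  assert (HWs : B <> A -> forall n k j, pev We (ZC n) (ZC k) + ZC j <> 0).
  { intros HBA n k j Ej. rewrite HWk0 in Ej.
    assert (Hba : b - a = ZC (- ((B - A) * n + j))).
    { unfold We in Ej. cbn [pev] in Ej. rewrite ZC_opp, ZC_add, ZC_mul.
      replace (b - a) with ((ZC (B - A) * ZC n + (b - a) + ZC j) - ZC (B - A) * ZC n - ZC j) by ring.
      rewrite Ej. ring. }
    set (u := ((B - A) * n + j)%Z) in *.
    set (n' := if (0 <=? u)%Z then 0%Z else (u * (B - A))%Z).
    assert (Hv : ((B - A) * n' - u <= 0)%Z).
    { unfold n'. destruct (Z.leb_spec 0 u). lia. assert (1 <= (B - A) * (B - A))%Z by nia. nia. }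
    apply (not_pole_Z _ ((B - A) * n' - u) (HWp n') Hv).
    unfold We. cbn [pev]. rewrite Hba. unfold Z.sub. rewrite !ZC_add, !ZC_opp, !ZC_mul, !ZC_add, !ZC_opp. ring. }
  assert (HW0 : B = A -> forall n k (m : nat), pev We (ZC n) (ZC k) + NC m <> 0).
  { intros HBA n k m E. rewrite HWk0 in E. apply (HWp n m).
    replace (pev We (ZC n) (ZC 0)) with ((pev We (ZC n) (ZC 0) + NC m) - NC m) by ring. rewrite E. unfold NC. ring. }
  set (w := word K A B). set (TL := termsW w (0, 0)%Z). set (L := length w).
  set (M := (2 * L + 1)%nat). set (E := if Z.eq_dec B A then 0%nat else M).
  assert (HTC : forall t, (Z.abs (fst t) <= Z.of_nat L)%Z -> (Z.abs (snd t) <= Z.of_nat L)%Z ->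
     (B <> A \/ (0 <= snd t)%Z) -> forall n k, TC M E (pev Xe (ZC n) (ZC k)) (pev We (ZC n) (ZC k)) t).
  { intros [t1 t3] H1 H3 H4 n k. cbn [fst snd] in *. unfold TC. cbn [fst snd].
    unfold E. destruct (Z.eq_dec B A) as [HBA|HBA].
    - destruct H4 as [H4|H4]; [contradiction|]. unfold M.
      repeat split; try lia.
      + intros j _. replace (pev Xe (ZC n) (ZC k) - NC (2 * L + 1) + NC j) with
          (pev Xe (ZC n) (ZC k) + ZC (Z.of_nat j - Z.of_nat (2 * L + 1))) by (unfold Z.sub; rewrite ZC_add, ZC_opp, !ZC_nat; ring). apply HX.
      + intros j _. replace (pev We (ZC n) (ZC k) - NC 0 + NC j) with (pev We (ZC n) (ZC k) + NC j) by (unfold NC; simpl; ring).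
        apply HW0; auto.
    - unfold M. repeat split; try lia.
      + intros j _. replace (pev Xe (ZC n) (ZC k) - NC (2 * L + 1) + NC j) with
          (pev Xe (ZC n) (ZC k) + ZC (Z.of_nat j - Z.of_nat (2 * L + 1))) by (unfold Z.sub; rewrite ZC_add, ZC_opp, !ZC_nat; ring). apply HX.
      + intros j _. replace (pev We (ZC n) (ZC k) - NC (2 * L + 1) + NC j) with
          (pev We (ZC n) (ZC k) + ZC (Z.of_nat j - Z.of_nat (2 * L + 1))) by (unfold Z.sub; rewrite ZC_add, ZC_opp, !ZC_nat; ring). apply HWs; auto. }
  set (g := fun n : Z => ZC (A + K) * ZC n + (a + k0) + (ZC (B - A) * ZC n + (b - a)) + NC M).
  assert (HY : forall n k, pev (PAdd (PAdd Xe We) (PC (NC M))) (ZC n) (ZC k) = ZC k + g n).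
  { intros. unfold Xe, We, g. cbn [pev]. ring. }
  assert (HXn : forall n k, pev Xe (ZC (n + 1)) (ZC k) = pev Xe (ZC n) (ZC k) + ZC (A + K)).
  { intros. unfold Xe. cbn [pev]. rewrite (ZC_add n 1), ZC_1. ring. }
  assert (HWn : forall n k, pev We (ZC (n + 1)) (ZC k) = pev We (ZC n) (ZC k) + ZC (B - A)).
  { intros. unfold We. cbn [pev]. rewrite (ZC_add n 1), ZC_1. ring. }
  assert (HXk : forall n k, pev Xe (ZC n) (ZC (k + 1)) = pev Xe (ZC n) (ZC k) + 1).
  { intros. unfold Xe. cbn [pev]. rewrite (ZC_add k 1), ZC_1. ring. }
  assert (HWk : forall n k, pev We (ZC n) (ZC (k + 1)) = pev We (ZC n) (ZC k)) by (intros; unfold We; reflexivity).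
  assert (HWc : (forall n k j, pev We (ZC n) (ZC k) - NC E + ZC j <> 0) \/ (B - A)%Z = 0%Z).
  { unfold E. destruct (Z.eq_dec B A) as [HBA|HBA]. right; lia. left. intros n k j.
    replace (pev We (ZC n) (ZC k) - NC M + ZC j) with (pev We (ZC n) (ZC k) + ZC (j - Z.of_nat M))
      by (unfold Z.sub; rewrite ZC_add, ZC_opp, ZC_nat; ring). apply HWs; auto. }
  assert (HTL : forall c t, In (c, t) TL -> (Z.abs (fst t) <= Z.of_nat L)%Z /\ (Z.abs (snd t) <= Z.of_nat L)%Z /\
     (B <> A \/ (0 <= snd t)%Z)).
  { intros c t Hin. destruct (terms_bound w (0, 0)%Z c t Hin) as [H1 H2]. cbn [fst snd] in *.
    rewrite !Z.sub_0_r in *. split; [|split]; auto.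
    destruct (Z.eq_dec B A) as [HBA|HBA]; [right|left; auto].
    unfold TL, w in Hin. rewrite HBA in Hin. apply (word_t3 K A c t Hin). }
  exists (fun n k => evalTL TL (pev Xe (ZC n) (ZC k)) (pev We (ZC n) (ZC k))).
  split; [|split].
  - apply (hyp2_ext _ _ HF). apply (hypTL M E _ Xe We (A + K) (B - A) g); auto.
    intros n k c t Hin. destruct Hin as [Hin|[]]. injection Hin; intros; subst. apply HTC; simpl; lia.
  - apply (hypTL M E TL Xe We (A + K) (B - A) g); auto.
    intros n k c t Hin. destruct (HTL c t Hin) as [H1 [H2 H3]]. apply HTC; auto.
  - intros n k. rewrite !HF. cbn [evalTL]. rewrite HXn, HWn, HXk, HWk.
    set (X := pev Xe (ZC n) (ZC k)). set (W := pev We (ZC n) (ZC k)).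
    assert (Hok : termOK X W TL).
    { intros c t Hin. destruct (HTL c t Hin) as [H1 [H2 H3]]. split. apply HX.
      destruct (Z.eq_dec B A) as [HBA|HBA].
      - destruct H3 as [H3|H3]; [contradiction|]. replace (ZC (snd t)) with (NC (Z.to_nat (snd t))) by (apply NC_Z; auto).
        apply HW0; auto.
      - apply HWs; auto. }
    pose proof (word_id w (0, 0)%Z X W Hok) as WI. fold TL in WI.
    unfold w in WI. rewrite dltW_word in WI. unfold Fo, oadd in WI. cbn [fst snd] in WI. unfold Fo. cbn [fst snd].
    rewrite !Z.add_0_l in WI. rewrite ZC_0 in *.
    transitivity (F00 (X + ZC (K + A)) (W + ZC (B - A)) - F00 (X + 0) (W + 0)).
    + replace (K + A)%Z with (A + K)%Z by lia. replace (X + ZC (A + K) + 0) with (X + ZC (A + K)) by ring.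
      replace (W + ZC (B - A) + 0) with (W + ZC (B - A)) by ring. ring.
    + rewrite WI. reflexivity.
Qed.
End Main.

Theorem theorem1 (z : C) (hz0 : z <> 0) (hz1 : z <> 1)
  (Lz Lw : C) (hLz : Cexp Lz = z) (hLw : Cexp Lw = z - 1) :
  WZ_seed F0_seed_dom (F0_seed Lz Lw).
Proof.
  split.
  - eapply hyp3; eauto.
  - intros K A B k0 a b Hdom. eapply main_mate; eauto.
Qed.
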